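(* Let $u_0\in L^1(\mathbb R)\cap BV(\mathbb R)$ and assume the CFL condition. For $n\ge0$ and $i\in\mathbb Z$ define $$W_i^n=\hat f(U_i^n,U_{i+1}^n)-D_+A(U_i^n)-b\sum_{l=-\infty}^{i}\sum_{j\in\mathbb Z}G^l_jU_j^n.$$ Then for all $n\ge0$, $$\sup_{i\in\mathbb Z}|W_i^n|\le\sup_{i\in\mathbb Z}|W_i^0|\qquad\text{and}\qquad\sum_{i\in\mathbb Z}|W^n_{i+1}-W^n_i|\le\sum_{i\in\mathbb Z}|W^0_{i+1}-W^0_i|.$$
   Context: Let $f,a:\mathbb R\to\mathbb R$ be Lipschitz, $a\ge0$ bounded, $f(0)=0$, $A(u)=\int_0^ua(s)ds$, $b\ge0$, $\lambda\in(0,1)$, $c_\lambda>0$, $\mathcal L[u](x)=c_\lambda\int_{|z|>0}\frac{u(x+z)-u(x)}{|z|^{1+\lambda}}dz$. Let $\hat f:\mathbb R^2\to\mathbb R$ be $C^1$ and Lipschitz, consistent ($\hat f(u,u)=f(u)$), nondecreasing in its first and nonincreasing in its second argument. Grid: $x_i=i\Delta x$, $I_i=[x_i,x_{i+1})$, $t_n=n\Delta t$. Weights $G^i_j=\int_{I_i}\mathcal L[\mathbf 1_{I_j}](x)dx$; these satisfy $G^i_j\ge0$ for $i\ne j$, $\sum_j|G^i_j|<\infty$, $\sum_iG^i_j=\sum_jG^i_j=0$, $G^i_j=G^j_i$, $G^{i+1}_{j+1}=G^i_j$, and $G^i_i=-d_\lambda\Delta x^{1-\lambda}$ with $d_\lambda=c_\lambda\big(\int_{|z|<1}|z|^{-\lambda}dz+\int_{|z|>1}|z|^{-1-\lambda}dz\big)$.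 $D_\pm U_i=\pm(U_{i\pm1}-U_i)/\Delta x$, $\mathcal L\langle U\rangle_i=\frac1{\Delta x}\sum_jG^i_jU_j$. Scheme: $U_i^{n+1}=U_i^n-\Delta t\,D_-\big[\hat f(U_i^n,U_{i+1}^n)-D_+A(U_i^n)\big]+\Delta t\,b\,\mathcal L\langle U^n\rangle_i$, $U^0_i=\frac1{\Delta x}\int_{I_i}u_0$. CFL condition: $\frac{\Delta t}{\Delta x}(\|\partial_{1}\hat f\|_\infty+\|\partial_{2}\hat f\|_\infty)+\frac{2\Delta t}{\Delta x^2}\|a\|_\infty+b\,d_\lambda\frac{\Delta t}{\Delta x^\lambda}\le1$. *)

(* Defs.v *)
From Stdlib Require Import Reals ZArith Classical ClassicalEpsilon.
Open Scope R_scope.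

(* Value of the Riemann integral of f over [a,b] (junk 0-free choice if not
   integrable; all uses below are on integrable functions). *)
Definition Rint (f : R -> R) (a b : R) : R :=
  epsilon (inhabits 0) (fun I => exists pr : Riemann_integrable f a b, RiemannInt pr = I).

(* Limit of a real sequence (chosen; meaningful when the sequence converges). *)
Definition seq_lim (u : nat -> R) : R := epsilon (inhabits 0) (fun l => Un_cv u l).

(* Partial sums over the integers: indices -(N+1) .. N. *)
Definition zpart (f : Z -> R) (N : nat) : R :=
  sum_f_R0 (fun k => f (Z.of_nat k) + f (- Z.of_nat (S k))%Z) N.

Definition Zsum (f : Z -> R) : R := seq_lim (zpart f).

Definition Zsum_upto (g : Z -> R) (i : Z) : R :=
  seq_lim (fun N => sum_f_R0 (fun k => g (i - Z.of_nat k)%Z) N).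

Definition Lipschitz (g : R -> R) : Prop :=
  exists L, forall x y, Rabs (g x - g y) <= L * Rabs (x - y).

Definition Lipschitz2 (g : R -> R -> R) : Prop :=
  exists L, forall u v u' v', Rabs (g u v - g u' v') <= L * (Rabs (u - u') + Rabs (v - v')).

Definition continuous2 (g : R -> R -> R) : Prop :=
  forall u v eps, 0 < eps -> exists delta, 0 < delta /\
    forall u' v', Rabs (u' - u) < delta -> Rabs (v' - v) < delta ->
      Rabs (g u' v' - g u v) < eps.

Definition C1_with_partials (g d1 d2 : R -> R -> R) : Prop :=
  (forall u v, derivable_pt_lim (fun s => g s v) u (d1 u v)) /\
  (forall u v, derivable_pt_lim (fun s => g u s) v (d2 u v)) /\
  continuous2 d1 /\ continuous2 d2.

Definition bounded_variation (u : R -> R) : Prop :=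
  exists V, forall x : nat -> R, (forall k, x k <= x (S k)) ->
    forall m, sum_f_R0 (fun k => Rabs (u (x (S k)) - u (x k))) m <= V.

(* u in L^1(R) (as an improper Riemann integral, u locally Riemann integrable) *)
Definition integrable_L1 (u : R -> R) : Prop :=
  (forall a b, inhabited (Riemann_integrable u a b)) /\
  exists C, forall N : nat, Rint (fun x => Rabs (u x)) (- INR N) (INR N) <= C.

Definition is_sup_abs2 (g : R -> R -> R) (M : R) : Prop :=
  is_lub (fun y => exists u v, y = Rabs (g u v)) M.
Definition is_sup_abs (g : R -> R) (M : R) : Prop :=
  is_lub (fun y => exists u, y = Rabs (g u)) M.

(* x^y for x >= 0, y > 0 (with 0^y = 0) *)
Definition pw (x y : R) : R := if Rle_dec x 0 then 0 else Rpower x y.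

Definition Aint (a : R -> R) (u : R) : R := Rint a 0 u.

(* d_lambda = c_lambda (int_{|z|<1} |z|^{-lambda} + int_{|z|>1} |z|^{-1-lambda}) *)
Definition dlam (lam c : R) : R := c * (2 / (1 - lam) + 2 / lam).

(* G^i_j = int_{I_i} L[1_{I_j}](x) dx, evaluated in closed form:
   Dx^{1-lam} c/(lam(1-lam)) (2|k|^{1-lam} - |k+1|^{1-lam} - |k-1|^{1-lam}), k=j-i. *)
Definition Gw (lam c dx : R) (i j : Z) : R :=
  let k := IZR (j - i) in
  Rpower dx (1 - lam) * (c / (lam * (1 - lam))) *
  (2 * pw (Rabs k) (1 - lam) - pw (Rabs (k + 1)) (1 - lam) - pw (Rabs (k - 1)) (1 - lam)).

Definition numflux (fh : R -> R -> R) (a : R -> R) (dx : R) (V : Z -> R) (i : Z) : R :=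
  fh (V i) (V (i + 1)%Z) - (Aint a (V (i + 1)%Z) - Aint a (V i)) / dx.

Definition Ldisc (lam c dx : R) (V : Z -> R) (i : Z) : R :=
  / dx * Zsum (fun j => Gw lam c dx i j * V j).

Fixpoint U (fh : R -> R -> R) (a : R -> R) (b lam c dx dt : R) (u0 : R -> R)
  (n : nat) : Z -> R :=
  match n with
  | O => fun i => / dx * Rint u0 (IZR i * dx) (IZR (i + 1) * dx)
  | S m => let V := U fh a b lam c dx dt u0 m in
      fun i => V i - dt * ((numflux fh a dx V i - numflux fh a dx V (i - 1)%Z) / dx)
               + dt * b * Ldisc lam c dx V i
  end.

Definition W (fh : R -> R -> R) (a : R -> R) (b lam c dx dt : R) (u0 : R -> R)
  (n : nat) (i : Z) : R :=
  let V := U fh a b lam c dx dt u0 n in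
  numflux fh a dx V i
  - b * Zsum_upto (fun l => Zsum (fun j => Gw lam c dx l j * V j)) i.

(* Main.v *)
Require Import Defs.
From Stdlib Require Import Reals ZArith.
From Stdlib Require Import Lra Lia Classical ClassicalEpsilon FunctionalExtensionality.
Open Scope R_scope.

Lemma zpart_0 f : zpart f 0 = f 0%Z + f (-1)%Z.
Proof. reflexivity. Qed.

Lemma zpart_S f N : zpart f (S N) = zpart f N + (f (Z.of_nat (S N)) + f (- Z.of_nat (S (S N)))%Z).
Proof. reflexivity. Qed.

Lemma zpart_ext f g N : (forall k, f k = g k) -> zpart f N = zpart g N.
Proof. intros H; unfold zpart; apply sum_eq; intros; rewrite !H; reflexivity. Qed.

Lemma zpart_le f g N : (forall k, f k <= g k) -> zpart f N <= zpart g N.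
Proof. intros H; unfold zpart; apply sum_Rle; intros; apply Rplus_le_compat; apply H. Qed.


Lemma zpart_nonneg f N : (forall k, 0 <= f k) -> 0 <= zpart f N.
Proof. intros H; unfold zpart; apply cond_pos_sum; intros n.
  pose proof (H (Z.of_nat n)); pose proof (H (- Z.of_nat (S n))%Z); lra. Qed.

Lemma zpart_plus f g N : zpart (fun k => f k + g k) N = zpart f N + zpart g N.
Proof. induction N. rewrite !zpart_0; ring. rewrite !zpart_S, IHN; ring. Qed.

Lemma zpart_scal c f N : zpart (fun k => c * f k) N = c * zpart f N.
Proof. induction N. rewrite !zpart_0; ring. rewrite !zpart_S, IHN; ring. Qed.

Lemma zpart_opp f N : zpart (fun k => - f k) N = - zpart f N.
Proof. induction N. rewrite !zpart_0; ring. rewrite !zpart_S, IHN; ring. Qed.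

Lemma zpart_mono f N M : (forall k, 0 <= f k) -> (N <= M)%nat -> zpart f N <= zpart f M.
Proof. intros H HNM; induction HNM. lra. rewrite zpart_S.
  pose proof (H (Z.of_nat (S m))); pose proof (H (- Z.of_nat (S (S m)))%Z); lra. Qed.

Lemma zpart_abs f N : Rabs (zpart f N) <= zpart (fun k => Rabs (f k)) N.
Proof. induction N. rewrite !zpart_0. apply Rabs_triang.
  rewrite !zpart_S. eapply Rle_trans. apply Rabs_triang.
  pose proof (Rabs_triang (f (Z.of_nat (S N))) (f (- Z.of_nat (S (S N)))%Z)). lra. Qed.

Lemma seq_lim_spec u l : Un_cv u l -> seq_lim u = l.
Proof. intros H. unfold seq_lim.
  pose proof (epsilon_spec (inhabits 0) (fun l => Un_cv u l) (ex_intro _ l H)) as H2.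
  eapply UL_sequence; eauto. Qed.

Lemma cv_const c : Un_cv (fun _ => c) c.
Proof. intros e He; exists 0%nat; intros; unfold Rdist; rewrite Rminus_diag, Rabs_R0; lra. Qed.

Lemma cv_eventually (u : nat -> R) c N0 : (forall N, (N0 <= N)%nat -> u N = c) -> Un_cv u c.
Proof. intros H e He; exists N0; intros n Hn; rewrite H by lia; unfold Rdist; rewrite Rminus_diag, Rabs_R0; lra. Qed.

Lemma cv_shiftS u l : Un_cv u l -> Un_cv (fun n => u (S n)) l.
Proof. intros H e He; destruct (H e He) as [N HN]; exists N; intros; apply HN; lia. Qed.

Lemma cv_unshiftS u l : Un_cv (fun n => u (S n)) l -> Un_cv u l.
Proof. intros H e He; destruct (H e He) as [N HN]; exists (S N); intros n Hn.
  destruct n. lia. apply HN; lia. Qed.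

Lemma abs_series_cv (a : nat -> R) B :
  (forall N, sum_f_R0 (fun k => Rabs (a k)) N <= B) -> {l | Un_cv (fun N => sum_f_R0 a N) l}.
Proof.
  intros HB.
  assert (Ha : {l | Un_cv (fun N => sum_f_R0 (fun k => Rabs (a k)) N) l}).
  { apply growing_cv. intro n; simpl. pose proof (Rabs_pos (a (S n))); lra.
    exists B; intros x [n ->]; apply HB. }
  destruct (Rseries_CV_comp (fun k => (Rabs (a k) + a k)/2) (fun k => Rabs (a k))) as [l1 H1].
  { intro n; split; pose proof (Rabs_pos (a n)); pose proof (Rle_abs (a n)); pose proof (Rle_abs (- a n)); rewrite Rabs_Ropp in *; lra. }
  exact Ha.
  destruct (Rseries_CV_comp (fun k => (Rabs (a k) - a k)/2) (fun k => Rabs (a k))) as [l2 H2].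
  { intro n; split; pose proof (Rabs_pos (a n)); pose proof (Rle_abs (a n)); pose proof (Rle_abs (- a n)); rewrite Rabs_Ropp in *; lra. }
  exact Ha.
  exists (l1 - l2).
  assert (E : forall N, sum_f_R0 a N = sum_f_R0 (fun k => (Rabs (a k) + a k)/2) N - sum_f_R0 (fun k => (Rabs (a k) - a k)/2) N).
  { intro N; rewrite <- minus_sum; apply sum_eq; intros; field. }
  intros e He; destruct (CV_minus _ _ _ _ H1 H2 e He) as [N HN]; exists N; intros n Hn.
  rewrite E; apply HN; auto.
Qed.

Definition Zsummable (f : Z -> R) := exists B, forall N, zpart (fun k => Rabs (f k)) N <= B.

Lemma Zsum_cv f : Zsummable f -> Un_cv (zpart f) (Zsum f).
Proof.
  intros [B HB].
  destruct (abs_series_cv (fun k => f (Z.of_nat k) + f (- Z.of_nat (S k))%Z) B) as [l Hl].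
  { intro N; eapply Rle_trans; [|apply (HB N)]. unfold zpart; apply sum_Rle; intros; apply Rabs_triang. }
  unfold Zsum; rewrite (seq_lim_spec _ l); [|exact Hl]. exact Hl.
Qed.

Lemma Zsum_unique f l : Un_cv (zpart f) l -> Zsum f = l.
Proof. apply seq_lim_spec. Qed.

Lemma Zsum_ext f g : (forall k, f k = g k) -> Zsum f = Zsum g.
Proof. intros H; f_equal; apply functional_extensionality; auto. Qed.

Lemma Zsummable_ext f g : (forall k, f k = g k) -> Zsummable f -> Zsummable g.
Proof. intros H; replace g with f; auto; apply functional_extensionality; auto. Qed.

Lemma Zsummable_dom f1 f2 g c1 c2 : 0 <= c1 -> 0 <= c2 -> Zsummable f1 -> Zsummable f2 ->
  (forall k, Rabs (g k) <= c1 * Rabs (f1 k) + c2 * Rabs (f2 k)) -> Zsummable g.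
Proof.
  intros H1 H2 [B1 HB1] [B2 HB2] H. exists (c1 * B1 + c2 * B2); intro N.
  eapply Rle_trans. apply (zpart_le _ _ N H).
  rewrite zpart_plus, !zpart_scal. specialize (HB1 N); specialize (HB2 N).
  apply Rplus_le_compat; apply Rmult_le_compat_l; auto.
Qed.

Lemma Zsummable_dom1 f g c : 0 <= c -> Zsummable f ->
  (forall k, Rabs (g k) <= c * Rabs (f k)) -> Zsummable g.
Proof. intros Hc Hf H; apply (Zsummable_dom f f g c 0); auto; try lra.
  intros k; specialize (H k); rewrite Rmult_0_l, Rplus_0_r; auto. Qed.

Lemma Zsummable_plus f g : Zsummable f -> Zsummable g -> Zsummable (fun k => f k + g k).
Proof. intros; apply (Zsummable_dom f g _ 1 1); try lra; auto; intros; rewrite !Rmult_1_l; apply Rabs_triang. Qed.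

Lemma Zsummable_scal c f : Zsummable f -> Zsummable (fun k => c * f k).
Proof. intros; apply (Zsummable_dom1 f _ (Rabs c)); auto. apply Rabs_pos. intros; rewrite Rabs_mult; lra. Qed.

Lemma Zsummable_minus f g : Zsummable f -> Zsummable g -> Zsummable (fun k => f k - g k).
Proof. intros; apply (Zsummable_dom f g _ 1 1); try lra; auto; intros; rewrite !Rmult_1_l.
  unfold Rminus; eapply Rle_trans; [apply Rabs_triang|]; rewrite Rabs_Ropp; lra. Qed.

Lemma Zsum_plus f g : Zsummable f -> Zsummable g -> Zsum (fun k => f k + g k) = Zsum f + Zsum g.
Proof. intros Hf Hg; apply Zsum_unique.
  intros e He; destruct (CV_plus _ _ _ _ (Zsum_cv f Hf) (Zsum_cv g Hg) e He) as [N HN].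
  exists N; intros; rewrite zpart_plus; apply HN; auto. Qed.

Lemma Zsum_scal c f : Zsummable f -> Zsum (fun k => c * f k) = c * Zsum f.
Proof. intros Hf; apply Zsum_unique.
  intros e He; destruct (CV_mult _ _ _ _ (cv_const c) (Zsum_cv f Hf) e He) as [N HN].
  exists N; intros; rewrite zpart_scal; apply HN; auto. Qed.

Lemma Zsum_minus f g : Zsummable f -> Zsummable g -> Zsum (fun k => f k - g k) = Zsum f - Zsum g.
Proof. intros Hf Hg. unfold Rminus.
  rewrite (Zsum_ext _ (fun k => f k + (-1) * g k)) by (intros; ring).
  rewrite Zsum_plus, Zsum_scal; auto. ring. apply Zsummable_scal; auto. Qed.

Lemma Zsum_le f g : Zsummable f -> Zsummable g -> (forall k, f k <= g k) -> Zsum f <= Zsum g.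
Proof. intros Hf Hg H. eapply Rle_cv_lim; [|apply Zsum_cv, Hf|apply Zsum_cv, Hg].
  intros; apply zpart_le; auto. Qed.

Lemma Zsummable_abs f : Zsummable f -> Zsummable (fun k => Rabs (f k)).
Proof. intros; apply (Zsummable_dom1 f _ 1); auto; try lra. intros; rewrite Rabs_Rabsolu; lra. Qed.

Lemma Zsum_abs f : Zsummable f -> Rabs (Zsum f) <= Zsum (fun k => Rabs (f k)).
Proof. intros Hf. eapply Rle_cv_lim with (Un := fun N => Rabs (zpart f N)).
  intros; apply zpart_abs.
  intros e He; destruct (Zsum_cv f Hf e He) as [N HN]; exists N; intros n Hn.
  specialize (HN n Hn); unfold Rdist in *. eapply Rle_lt_trans; [apply Rabs_triang_inv2|]; auto.
  apply Zsum_cv, Zsummable_abs, Hf. Qed.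

Lemma Zsum_bound f B : Zsummable f -> (forall N, zpart f N <= B) -> Zsum f <= B.
Proof. intros Hf H. eapply Rle_cv_lim; [|apply Zsum_cv, Hf|apply cv_const]. auto. Qed.

Lemma zpart_le_Zsum f N : Zsummable f -> (forall k, 0 <= f k) -> zpart f N <= Zsum f.
Proof. intros Hf H. apply sum_incr. apply Zsum_cv, Hf.
  intros n; pose proof (H (Z.of_nat n)); pose proof (H (- Z.of_nat (S n))%Z); lra. Qed.

Lemma Zsum_nonneg f : Zsummable f -> (forall k, 0 <= f k) -> 0 <= Zsum f.
Proof. intros; eapply Rle_trans; [|apply (zpart_le_Zsum f 0)]; auto; apply zpart_nonneg; auto. Qed.

Lemma Zsum_abs_bound f B : (forall N, zpart (fun k => Rabs (f k)) N <= B) -> Zsum (fun k => Rabs (f k)) <= B.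
Proof. intros H; apply Zsum_bound; auto. exists B; intros N; eapply Rle_trans; [|apply (H N)].
  right; apply zpart_ext; intros; apply Rabs_Rabsolu. Qed.

Definition inw (K : nat) (d : Z) : bool := (Z.leb (- (Z.of_nat K + 1)) d && Z.leb d (Z.of_nat K))%bool.

Lemma inw_true K d : inw K d = true <-> (- (Z.of_nat K + 1) <= d <= Z.of_nat K)%Z.
Proof. unfold inw; rewrite Bool.andb_true_iff, !Z.leb_le; tauto. Qed.

Lemma zpart_delta k x N : zpart (fun d => if Z.eq_dec d k then x else 0) N = if inw N k then x else 0.
Proof.
  induction N.
  - rewrite zpart_0. destruct (Z.eq_dec 0 k); destruct (Z.eq_dec (-1) k); destruct (inw 0 k) eqn:E;
      try (rewrite inw_true in E); try (rewrite <- Bool.not_true_iff_false, inw_true in E); simpl in *; try lia; lra.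
  - rewrite zpart_S, IHN.
    destruct (Z.eq_dec (Z.of_nat (S N)) k); destruct (Z.eq_dec (- Z.of_nat (S (S N))) k);
    destruct (inw N k) eqn:E; destruct (inw (S N) k) eqn:E2;
      try (rewrite inw_true in E); try (rewrite <- Bool.not_true_iff_false, inw_true in E);
      try (rewrite inw_true in E2); try (rewrite <- Bool.not_true_iff_false, inw_true in E2); try lia; lra.
Qed.

Lemma inw_eventually k : forall N, (Z.abs_nat k <= N)%nat -> inw N k = true.
Proof. intros N H; apply inw_true; lia. Qed.

Lemma Zsum_delta k x : Zsum (fun d => if Z.eq_dec d k then x else 0) = x.
Proof. apply Zsum_unique. apply (cv_eventually _ _ (Z.abs_nat k)). intros N HN.
  rewrite zpart_delta, inw_eventually; auto. Qed.

Lemma Zsummable_delta k x : Zsummable (fun d => if Z.eq_dec d k then x else 0).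
Proof. exists (Rabs x); intro N. eapply Rle_trans.
  apply zpart_le with (g := fun d => if Z.eq_dec d k then Rabs x else 0).
  intros d; destruct (Z.eq_dec d k); [lra|rewrite Rabs_R0; lra].
  rewrite zpart_delta; destruct (inw N k); pose proof (Rabs_pos x); lra. Qed.

Lemma term_le_zpart f N k : (forall d, 0 <= f d) -> inw N k = true -> f k <= zpart f N.
Proof. intros Hf Hk. pose proof (zpart_delta k (f k) N) as E; rewrite Hk in E.
  rewrite <- E. apply zpart_le. intros d; destruct (Z.eq_dec d k); [subst; lra|apply Hf]. Qed.

Lemma term_le_bound f B k : (forall N, zpart (fun d => Rabs (f d)) N <= B) -> Rabs (f k) <= B.
Proof. intros H. eapply Rle_trans; [|apply (H (Z.abs_nat k))].
  apply (term_le_zpart (fun d => Rabs (f d))); [intros; apply Rabs_pos|apply inw_eventually; lia]. Qed.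

Lemma zpart_stable f K : (forall d, inw K d = false -> f d = 0) -> forall N, (K <= N)%nat -> zpart f N = zpart f K.
Proof. intros H N HN; induction HN; auto. rewrite zpart_S, IHHN.
  rewrite (H (Z.of_nat (S m))), (H (- Z.of_nat (S (S m)))%Z); [ring| |];
  apply Bool.not_true_iff_false; rewrite inw_true; lia. Qed.

Lemma zpart_ext_win f g N : (forall d, inw N d = true -> f d = g d) -> zpart f N = zpart g N.
Proof. intros H. unfold zpart; apply sum_eq; intros i Hi.
  rewrite !H; auto; apply inw_true; lia. Qed.

Lemma Zsum_window f K : Zsum (fun d => if inw K d then f d else 0) = zpart f K.
Proof. apply Zsum_unique. apply (cv_eventually _ _ K). intros N HN.
  rewrite (zpart_stable _ K); auto. apply zpart_ext_win; intros d Hd; rewrite Hd; auto.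
  intros d Hd; rewrite Hd; auto. Qed.

Lemma Zsummable_window f K : Zsummable (fun d => if inw K d then f d else 0).
Proof. exists (zpart (fun d => Rabs (if inw K d then f d else 0)) K). intros N.
  destruct (le_lt_dec K N).
  - right; apply zpart_stable; auto. intros d Hd; rewrite Hd; apply Rabs_R0.
  - apply zpart_mono; [intros; apply Rabs_pos|lia]. Qed.

Definition Zbnd (f : Z -> R) B := forall N, zpart (fun k => Rabs (f k)) N <= B.

Lemma zpart_shift1 f N : zpart (fun k => f (k + 1)%Z) N = zpart f N - f (- Z.of_nat (S N))%Z + f (Z.of_nat (S N)).
Proof. induction N.
  - rewrite !zpart_0. replace (0+1)%Z with 1%Z by reflexivity. replace (-1+1)%Z with 0%Z by reflexivity.
    simpl; ring.
  - rewrite !zpart_S, IHN.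
    replace (Z.of_nat (S N) + 1)%Z with (Z.of_nat (S (S N))) by lia.
    replace (- Z.of_nat (S (S N)) + 1)%Z with (- Z.of_nat (S N))%Z by lia. ring. Qed.

Lemma zpart_shiftm1 f N : zpart (fun k => f (k - 1)%Z) N = zpart f N - f (Z.of_nat N) + f (- Z.of_nat (S (S N)))%Z.
Proof. induction N.
  - rewrite !zpart_0. replace (0-1)%Z with (-1)%Z by reflexivity. replace (-1-1)%Z with (-2)%Z by reflexivity.
    simpl; ring.
  - rewrite !zpart_S, IHN.
    replace (Z.of_nat (S N) - 1)%Z with (Z.of_nat N) by lia.
    replace (- Z.of_nat (S (S N)) - 1)%Z with (- Z.of_nat (S (S (S N))))%Z by lia. ring. Qed.

Lemma Zbnd_shift1 f B : Zbnd f B -> Zbnd (fun k => f (k + 1)%Z) B.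
Proof. intros H N. rewrite (zpart_shift1 (fun k => Rabs (f k))). specialize (H (S N)); rewrite zpart_S in H.
  pose proof (Rabs_pos (f (- Z.of_nat (S (S N)))%Z)); pose proof (Rabs_pos (f (- Z.of_nat (S N)))%Z); lra. Qed.

Lemma Zbnd_shiftm1 f B : Zbnd f B -> Zbnd (fun k => f (k - 1)%Z) B.
Proof. intros H N. rewrite (zpart_shiftm1 (fun k => Rabs (f k))). specialize (H (S N)); rewrite zpart_S in H.
  pose proof (Rabs_pos (f (Z.of_nat (S N)))); pose proof (Rabs_pos (f (Z.of_nat N))); lra. Qed.

Lemma Zbnd_shift f B z : Zbnd f B -> Zbnd (fun k => f (k + z)%Z) B.
Proof. revert f. induction z using Z.peano_ind; intros f H.
  - intros N; rewrite <- (H N); right; apply zpart_ext; intros; rewrite Z.add_0_r; auto.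
  - intros N. rewrite <- (IHz _ (Zbnd_shift1 f B H) N); right; apply zpart_ext; intros; f_equal; f_equal; lia.
  - intros N. rewrite <- (IHz _ (Zbnd_shiftm1 f B H) N); right; apply zpart_ext; intros; f_equal; f_equal; lia.
Qed.

Lemma Zsummable_shift f z : Zsummable f -> Zsummable (fun k => f (k + z)%Z).
Proof. intros [B H]; exists B; apply Zbnd_shift; exact H. Qed.

Lemma Zsummable_tails f : Zsummable f -> Un_cv (fun N => f (Z.of_nat N)) 0 /\ Un_cv (fun N => f (- Z.of_nat N)%Z) 0.
Proof. intros Hf. pose proof (Zsum_cv _ (Zsummable_abs f Hf)) as Hc. set (L := Zsum _) in Hc.
  split; intros e He; destruct (Hc (e/2)) as [N0 HN0]; try lra.
  - exists (S N0); intros n Hn; destruct n; [lia|].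
    pose proof (HN0 (S n) ltac:(lia)); pose proof (HN0 n ltac:(lia)); rewrite zpart_S in *. unfold Rdist in *.
    rewrite Rminus_0_r. pose proof (Rabs_pos (f (- Z.of_nat (S (S n)))%Z)).
    apply Rabs_def2 in H; apply Rabs_def2 in H0; lra.
  - exists (S (S N0)); intros n Hn; destruct n; [lia|]; destruct n; [lia|].
    pose proof (HN0 (S n) ltac:(lia)); pose proof (HN0 n ltac:(lia)); rewrite zpart_S in *. unfold Rdist in *.
    rewrite Rminus_0_r. pose proof (Rabs_pos (f (Z.of_nat (S n)))).
    apply Rabs_def2 in H; apply Rabs_def2 in H0; lra.
Qed.

Lemma Zsum_shift1 f : Zsummable f -> Zsum (fun k => f (k + 1)%Z) = Zsum f.
Proof. intros Hf. apply Zsum_unique. destruct (Zsummable_tails f Hf) as [T1 T2].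
  pose proof (Zsum_cv f Hf) as Hc.
  apply cv_shiftS in T1. apply cv_shiftS in T2.
  intros e He. destruct (CV_plus _ _ _ _ (CV_minus _ _ _ _ Hc T2) T1 e He) as [N HN]; exists N; intros n Hn.
  rewrite zpart_shift1. specialize (HN n Hn). simpl in HN. rewrite Rminus_0_r, Rplus_0_r in HN. exact HN. Qed.

Lemma Zsum_shiftm1 f : Zsummable f -> Zsum (fun k => f (k - 1)%Z) = Zsum f.
Proof. intros Hf. apply Zsum_unique. destruct (Zsummable_tails f Hf) as [T1 T2].
  pose proof (Zsum_cv f Hf) as Hc.
  apply cv_shiftS in T2. apply cv_shiftS in T2.
  intros e He. destruct (CV_plus _ _ _ _ (CV_minus _ _ _ _ Hc T1) T2 e He) as [N HN]; exists N; intros n Hn.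
  rewrite zpart_shiftm1. specialize (HN n Hn). simpl in HN. rewrite Rminus_0_r, Rplus_0_r in HN. exact HN. Qed.

Lemma Zsum_shift f z : Zsummable f -> Zsum (fun k => f (k + z)%Z) = Zsum f.
Proof. revert f. induction z using Z.peano_ind; intros f H.
  - apply Zsum_ext; intros; rewrite Z.add_0_r; auto.
  - rewrite <- (Zsum_shift1 f H). rewrite <- (IHz (fun k => f (k + 1)%Z)) by (apply Zsummable_shift; auto).
    apply Zsum_ext; intros; f_equal; lia.
  - rewrite <- (Zsum_shiftm1 f H).
    rewrite <- (IHz (fun k => f (k - 1)%Z)).
    apply Zsum_ext; intros; f_equal; lia.
    destruct H as [B HB]; exists B; apply Zbnd_shiftm1; auto.
Qed.

Definition tozero_m (w : Z -> R) := forall e, 0 < e -> exists K, forall i, (i <= K)%Z -> Rabs (w i) < e.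

Lemma Zsummable_tozero f : Zsummable f -> tozero_m f.
Proof. intros Hf e He. destruct (Zsummable_tails f Hf) as [_ T]. destruct (T e He) as [N HN].
  exists (- Z.of_nat N)%Z; intros i Hi. specialize (HN (Z.to_nat (- i)) ltac:(lia)).
  unfold Rdist in HN; rewrite Rminus_0_r in HN. replace (- Z.of_nat (Z.to_nat (- i)))%Z with i in HN by lia. auto. Qed.

Lemma zpart_Zsum_swap (H : Z -> Z -> R) N : (forall i, Zsummable (H i)) ->
  Zsummable (fun j => zpart (fun i => H i j) N) /\
  zpart (fun i => Zsum (H i)) N = Zsum (fun j => zpart (fun i => H i j) N).
Proof. intros Hs. induction N.
  - split. eapply Zsummable_ext; [|apply (Zsummable_plus _ _ (Hs 0%Z) (Hs (-1)%Z))]. intros; rewrite zpart_0; auto.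
    rewrite zpart_0, <- Zsum_plus by auto. apply Zsum_ext; intros; rewrite zpart_0; auto.
  - destruct IHN as [IH1 IH2]. split.
    eapply Zsummable_ext; [|apply (Zsummable_plus _ _ IH1 (Zsummable_plus _ _ (Hs (Z.of_nat (S N))) (Hs (- Z.of_nat (S (S N)))%Z)))].
    intros; rewrite zpart_S; auto.
    rewrite zpart_S, IH2, <- (Zsum_plus (H _)), <- Zsum_plus by (try apply Zsummable_plus; auto).
    apply Zsum_ext; intros; rewrite zpart_S; auto.
Qed.

Definition upart (g : Z -> R) (i : Z) (M : nat) := sum_f_R0 (fun k => g (i - Z.of_nat k)%Z) M.

Lemma upart_le_zpart x i M : (forall d, 0 <= x d) -> upart x i M <= zpart (fun m => x (m + (i + 1))%Z) M.
Proof. intros H. unfold upart, zpart. apply sum_Rle; intros k _.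
  replace (- Z.of_nat (S k) + (i + 1))%Z with (i - Z.of_nat k)%Z by lia.
  pose proof (H (Z.of_nat k + (i + 1))%Z); lra. Qed.

Lemma upart_abs_bound g B i M : Zbnd g B -> sum_f_R0 (fun k => Rabs (g (i - Z.of_nat k)%Z)) M <= B.
Proof. intros H. eapply Rle_trans. apply (upart_le_zpart (fun d => Rabs (g d))). intros; apply Rabs_pos.
  apply (Zbnd_shift g B (i+1) H). Qed.

Lemma upto_cv g i : Zsummable g -> Un_cv (upart g i) (Zsum_upto g i).
Proof. intros [B H]. destruct (abs_series_cv (fun k => g (i - Z.of_nat k)%Z) B) as [l Hl].
  intros; apply upart_abs_bound; auto.
  unfold Zsum_upto; rewrite (seq_lim_spec _ l); auto. Qed.

Lemma upto_unique g i l : Un_cv (upart g i) l -> Zsum_upto g i = l.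
Proof. apply seq_lim_spec. Qed.

Lemma upart_S g i M : upart g i (S M) = g i + upart g (i - 1)%Z M.
Proof. unfold upart. rewrite decomp_sum by lia. simpl pred. rewrite Z.sub_0_r. f_equal.
  apply sum_eq; intros. f_equal. lia. Qed.

Lemma upto_rec g i : Zsummable g -> Zsum_upto g i = g i + Zsum_upto g (i - 1)%Z.
Proof. intros Hg. pose proof (cv_shiftS _ _ (upto_cv g i Hg)) as H1.
  pose proof (upto_cv g (i-1) Hg) as H2.
  assert (H3 : Un_cv (upart g (i-1)) (Zsum_upto g i - g i)).
  { intros e He; destruct (H1 e He) as [N HN]; exists N; intros n Hn; specialize (HN n Hn).
    rewrite upart_S in HN; unfold Rdist in *. replace (upart g (i - 1) n - (Zsum_upto g i - g i)) with (g i + upart g (i - 1) n - Zsum_upto g i) by ring. auto. }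
  rewrite (UL_sequence _ _ _ H2 H3). ring. Qed.

Lemma upto_bound g B i : Zbnd g B -> Rabs (Zsum_upto g i) <= B.
Proof. intros H. assert (Hs : Zsummable g) by (exists B; auto).
  apply Rabs_le; split.
  - eapply Rle_cv_lim; [|apply cv_const|apply upto_cv, Hs]. intros n.
    pose proof (Rsum_abs (fun k => g (i - Z.of_nat k)%Z) n); pose proof (upart_abs_bound g B i n H).
    unfold upart; pose proof (Rle_abs (- sum_f_R0 (fun k : nat => g (i - Z.of_nat k)%Z) n)); rewrite Rabs_Ropp in *; lra.
  - eapply Rle_cv_lim; [|apply upto_cv, Hs|apply cv_const]. intros n.
    pose proof (Rsum_abs (fun k => g (i - Z.of_nat k)%Z) n); pose proof (upart_abs_bound g B i n H).
    unfold upart; pose proof (Rle_abs (sum_f_R0 (fun k : nat => g (i - Z.of_nat k)%Z) n)); lra.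
Qed.

Lemma upto_abs g i : Zsummable g -> Rabs (Zsum_upto g i) <= Zsum_upto (fun k => Rabs (g k)) i.
Proof. intros Hs. eapply Rle_cv_lim with (Un := fun n => Rabs (upart g i n)).
  intros; apply Rsum_abs.
  intros e He; destruct (upto_cv g i Hs e He) as [N HN]; exists N; intros n Hn.
  specialize (HN n Hn); unfold Rdist in *. eapply Rle_lt_trans; [apply Rabs_triang_inv2|]; auto.
  exact (upto_cv _ i (Zsummable_abs _ Hs)). Qed.

Lemma upto_tozero g : Zsummable g -> tozero_m (Zsum_upto g).
Proof. intros Hs e He.
  set (x := fun k => Rabs (g k)). assert (Hx : Zsummable x) by (apply Zsummable_abs; auto).
  set (T := Zsum_upto x).
  assert (Tmono : forall K j, T (K - Z.of_nat j)%Z <= T K).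
  { intros K j; induction j. rewrite Z.sub_0_r; lra.
    pose proof (upto_rec x (K - Z.of_nat j) Hx) as E.
    replace (K - Z.of_nat (S j))%Z with (K - Z.of_nat j - 1)%Z by lia.
    pose proof (Rabs_pos (g (K - Z.of_nat j)%Z)); unfold x in *; unfold T in *; lra. }
  assert (Tform : forall m, T (- Z.of_nat (S m))%Z = T 0%Z - upart x 0 m).
  { induction m.
    - unfold T; rewrite (upto_rec x 0) by auto. unfold upart; simpl. ring.
    - unfold T in *; pose proof (upto_rec x (- Z.of_nat (S m)) Hx) as E.
      replace (- Z.of_nat (S m) - 1)%Z with (- Z.of_nat (S (S m)))%Z in E by lia.
      unfold upart in *; rewrite tech5. replace (0 - Z.of_nat (S m))%Z with (- Z.of_nat (S m))%Z by lia. lra. }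
  destruct (upto_cv x 0 Hx e He) as [M0 HM0].
  exists (- Z.of_nat (S M0))%Z. intros i Hi.
  eapply Rle_lt_trans. apply upto_abs; auto. fold x; fold T.
  assert (Ei : i = (- Z.of_nat (S M0) - Z.of_nat (Z.to_nat (- Z.of_nat (S M0) - i)))%Z) by (clear - Hi; lia).
  rewrite Ei.
  eapply Rle_lt_trans; [apply Tmono|]. rewrite Tform. specialize (HM0 M0 (le_n _)). unfold Rdist in HM0.
  apply Rabs_def2 in HM0. unfold T; lra.
Qed.

Section GSec.
Variables lam c dx : R.
Hypothesis Hlam : 0 < lam < 1.
Hypothesis Hc : 0 < c.
Hypothesis Hdx : 0 < dx.

Let s := 1 - lam.
Definition kap := Rpower dx (1 - lam) * (c / (lam * (1 - lam))).
Definition hz (m : Z) := pw (Rabs (IZR m)) (1 - lam).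
Definition gg (m : Z) := Gw lam c dx 0 m.

Lemma kap_pos : 0 < kap.
Proof. unfold kap. apply Rmult_lt_0_compat. unfold Rpower; apply exp_pos.
  apply Rdiv_lt_0_compat; auto. apply Rmult_lt_0_compat; lra. Qed.

Lemma gg_form m : gg m = kap * (2 * hz m - hz (m + 1) - hz (m - 1)).
Proof. unfold gg, Gw, kap, hz. rewrite Z.sub_0_r, plus_IZR, minus_IZR. reflexivity. Qed.

Lemma Gw_shift i j : Gw lam c dx i j = gg (j - i).
Proof. unfold gg, Gw. rewrite Z.sub_0_r. reflexivity. Qed.

Lemma hz_opp m : hz (- m) = hz m.
Proof. unfold hz. rewrite opp_IZR, Rabs_Ropp; auto. Qed.

Lemma hz_0 : hz 0 = 0.
Proof. unfold hz, pw. simpl. rewrite Rabs_R0. destruct (Rle_dec 0 0); auto; lra. Qed.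

Lemma pw_pos x : 0 < x -> pw x (1 - lam) = Rpower x (1 - lam).
Proof. intros; unfold pw; destruct (Rle_dec x 0); auto; lra. Qed.

Lemma hz_1 : hz 1 = 1.
Proof. unfold hz. simpl IZR. rewrite Rabs_R1, pw_pos by lra. unfold Rpower; rewrite ln_1, Rmult_0_r, exp_0; auto. Qed.

Lemma hz_m1 : hz (-1) = 1.
Proof. rewrite <- hz_1. exact (hz_opp 1). Qed.

Lemma hz_m2 : hz (-2) = hz 2.
Proof. exact (hz_opp 2). Qed.

Lemma hz_nonneg m : 0 <= hz m.
Proof. unfold hz, pw. destruct (Rle_dec _ 0). lra. unfold Rpower; left; apply exp_pos. Qed.

Lemma pw_mono x y : 0 <= x <= y -> pw x (1 - lam) <= pw y (1 - lam).
Proof. intros H. unfold pw. destruct (Rle_dec x 0); destruct (Rle_dec y 0).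
  lra. unfold Rpower; left; apply exp_pos. lra. apply Rle_Rpower_l; lra. Qed.

Lemma hz_mono_nat (N M : nat) : (N <= M)%nat -> hz (Z.of_nat N) <= hz (Z.of_nat M).
Proof. intros H; unfold hz; apply pw_mono. rewrite <- !INR_IZR_INZ. rewrite !Rabs_right; try apply Rle_ge, pos_INR.
  split; [apply pos_INR|apply le_INR; auto]. Qed.

Lemma rp_dec a b : 0 < a -> a < b -> Rpower b (1 - lam - 1) <= Rpower a (1 - lam - 1).
Proof. intros Ha Hab. unfold Rpower. left; apply exp_increasing.
  pose proof (ln_increasing a b Ha Hab). nra. Qed.

Lemma concave_step x : 1 < x -> Rpower (x + 1) (1 - lam) + Rpower (x - 1) (1 - lam) <= 2 * Rpower x (1 - lam).
Proof. intros Hx.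
  assert (D : forall y, 0 < y -> derivable_pt_lim (fun z => Rpower z (1 - lam)) y ((1 - lam) * Rpower y (1 - lam - 1))).
  { intros; apply derivable_pt_lim_power; auto. }
  destruct (MVT_cor2 (fun z => Rpower z (1 - lam)) (fun y => (1 - lam) * Rpower y (1 - lam - 1)) x (x + 1)) as [c1 [E1 H1]].
  lra. intros; apply D; lra.
  destruct (MVT_cor2 (fun z => Rpower z (1 - lam)) (fun y => (1 - lam) * Rpower y (1 - lam - 1)) (x - 1) x) as [c2 [E2 H2]].
  lra. intros; apply D; lra.
  pose proof (rp_dec c2 c1 ltac:(lra) ltac:(lra)).
  replace (x + 1 - x) with 1 in E1 by ring. replace (x - (x - 1)) with 1 in E2 by ring.
  assert (0 < 1 - lam) by lra. nra. Qed.

Lemma gg_nonneg_pos m : (1 <= m)%Z -> 0 <= gg m.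
Proof. intros Hm. rewrite gg_form. apply Rmult_le_pos; [left; apply kap_pos|].
  destruct (Z.eq_dec m 1).
  - subst. simpl (1 - 1)%Z. simpl (1+1)%Z. rewrite hz_1, hz_0. unfold hz. simpl IZR.
    rewrite Rabs_right by lra. rewrite pw_pos by lra.
    assert (Rpower 2 (1 - lam) <= Rpower 2 1) by (apply Rle_Rpower; lra). rewrite Rpower_1 in H by lra. lra.
  - unfold hz. rewrite plus_IZR, minus_IZR. assert (1 < IZR m) by (apply IZR_lt; lia).
    rewrite !Rabs_right by lra. rewrite !pw_pos by lra. pose proof (concave_step (IZR m) H). simpl IZR. lra.
Qed.

Lemma gg_even m : gg (- m) = gg m.
Proof. rewrite !gg_form. rewrite (hz_opp m). replace (- m + 1)%Z with (- (m - 1))%Z by lia.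
  replace (- m - 1)%Z with (- (m + 1))%Z by lia. rewrite !hz_opp. ring. Qed.

Lemma gg_nonneg m : m <> 0%Z -> 0 <= gg m.
Proof. intros H. destruct (Z_lt_le_dec 0 m). apply gg_nonneg_pos; lia.
  rewrite <- gg_even; apply gg_nonneg_pos; lia. Qed.

Lemma gg_0 : gg 0 = - (dlam lam c * Rpower dx (1 - lam)).
Proof. rewrite gg_form. simpl (0+1)%Z. simpl (0-1)%Z. rewrite hz_0, hz_m1, hz_1. unfold kap, dlam. field. lra. Qed.

Lemma gg_0_neg : gg 0 < 0.
Proof. rewrite gg_form. simpl (0+1)%Z. simpl (0-1)%Z. rewrite hz_0, hz_m1, hz_1. pose proof kap_pos. lra. Qed.

Lemma zpart_gg N : zpart gg N = kap * (hz (Z.of_nat N) - hz (Z.of_nat N + 2)).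
Proof. induction N.
  - rewrite zpart_0, !gg_form. simpl. rewrite hz_m1, hz_m2, hz_0, hz_1. ring.
  - rewrite zpart_S, IHN, !gg_form.
    replace (- Z.of_nat (S (S N)) + 1)%Z with (- (Z.of_nat (S N)))%Z by lia.
    replace (- Z.of_nat (S (S N)) - 1)%Z with (- (Z.of_nat N + 3))%Z by lia.
    rewrite !hz_opp. replace (Z.of_nat (S N) + 1)%Z with (Z.of_nat N + 2)%Z by lia.
    replace (Z.of_nat (S N) - 1)%Z with (Z.of_nat N)%Z by lia.
    replace (Z.of_nat (S N) + 2)%Z with (Z.of_nat N + 3)%Z by lia.
    replace (Z.of_nat (S (S N))) with (Z.of_nat N + 2)%Z by lia. ring.
Qed.

Lemma zpart_gg_nonpos N : zpart gg N <= 0.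
Proof. rewrite zpart_gg. pose proof kap_pos. replace (Z.of_nat N + 2)%Z with (Z.of_nat (N + 2)) by lia.
  pose proof (hz_mono_nat N (N+2) ltac:(lia)). nra. Qed.

Definition Gm := - 2 * gg 0.

Lemma Gm_pos : 0 < Gm.
Proof. unfold Gm; pose proof gg_0_neg; lra. Qed.

Lemma gg_abs m : Rabs (gg m) = gg m + (if Z.eq_dec m 0 then - 2 * gg 0 else 0).
Proof. destruct (Z.eq_dec m 0). subst. rewrite Rabs_left by apply gg_0_neg. ring.
  rewrite Rabs_right by (apply Rle_ge, gg_nonneg; auto). ring. Qed.

Lemma gg_bnd : Zbnd gg Gm.
Proof. intros N. rewrite (zpart_ext _ _ N gg_abs), zpart_plus, zpart_delta.
  rewrite (inw_eventually 0 N) by (simpl; lia). pose proof (zpart_gg_nonpos N). unfold Gm; lra. Qed.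

Lemma gg_summable : Zsummable gg.
Proof. exists Gm; apply gg_bnd. Qed.

Lemma Zsum_gg_nonpos : Zsum gg <= 0.
Proof. apply Zsum_bound. apply gg_summable. apply zpart_gg_nonpos. Qed.

Lemma gg_abs_le m : Rabs (gg m) <= Gm.
Proof. apply (term_le_bound gg Gm m gg_bnd). Qed.

Lemma Gw_row_bnd i : Zbnd (fun j => Gw lam c dx i j) Gm.
Proof. intros N. rewrite <- (Zbnd_shift gg Gm (- i) gg_bnd N). right; apply zpart_ext; intros; rewrite Gw_shift; f_equal; f_equal; lia. Qed.

Lemma Gw_col_bnd j : Zbnd (fun i => Gw lam c dx i j) Gm.
Proof. intros N. rewrite <- (Zbnd_shift gg Gm (- j) gg_bnd N). right; apply zpart_ext; intros.
  rewrite Gw_shift, <- gg_even; f_equal; f_equal; lia. Qed.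

Lemma Gw_row_Zsum i : Zsum (fun j => Gw lam c dx i j) = Zsum gg.
Proof. rewrite <- (Zsum_shift gg (- i) gg_summable). apply Zsum_ext; intros; rewrite Gw_shift; f_equal; lia. Qed.

Lemma Gw_col_Zsum j : Zsum (fun i => Gw lam c dx i j) = Zsum gg.
Proof. rewrite <- (Zsum_shift gg (- j) gg_summable). apply Zsum_ext; intros; rewrite Gw_shift, <- gg_even; f_equal; lia. Qed.

Definition gp (i j : Z) := if Z.eq_dec j i then 0 else Gw lam c dx i j.

Lemma gp_nonneg i j : 0 <= gp i j.
Proof. unfold gp; destruct (Z.eq_dec j i). lra. rewrite Gw_shift; apply gg_nonneg; lia. Qed.

Lemma gp_sym i j : gp i j = gp j i.
Proof. unfold gp. destruct (Z.eq_dec j i); destruct (Z.eq_dec i j); try lia; auto.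
  rewrite !Gw_shift, <- gg_even; f_equal; lia. Qed.

Lemma Gw_split i j : Gw lam c dx i j = gp i j + (if Z.eq_dec j i then gg 0 else 0).
Proof. unfold gp; destruct (Z.eq_dec j i). subst; rewrite Gw_shift, Z.sub_diag; ring. ring. Qed.

Lemma gp_row_summable i : Zsummable (gp i).
Proof. apply (Zsummable_dom1 (fun j => Gw lam c dx i j) _ 1). lra. exists Gm; apply Gw_row_bnd.
  intros j; unfold gp; destruct (Z.eq_dec j i). rewrite Rabs_R0; pose proof (Rabs_pos (Gw lam c dx i j)); lra. lra. Qed.

Lemma gp_row_Zsum i : Zsum (gp i) = Zsum gg - gg 0.
Proof. rewrite <- Gw_row_Zsum with (i := i).
  rewrite (Zsum_ext (fun j => Gw lam c dx i j) (fun j => gp i j + (if Z.eq_dec j i then gg 0 else 0))) by apply Gw_split.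
  rewrite Zsum_plus, Zsum_delta. ring. apply gp_row_summable. apply Zsummable_delta. Qed.

Lemma gp_row_le i : Zsum (gp i) <= - gg 0.
Proof. rewrite gp_row_Zsum. pose proof Zsum_gg_nonpos; lra. Qed.

Lemma gp_col_summable j : Zsummable (fun i => gp i j).
Proof. eapply Zsummable_ext; [|apply (gp_row_summable j)]. intros; apply gp_sym. Qed.

Lemma gp_col_le j : Zsum (fun i => gp i j) <= - gg 0.
Proof. rewrite (Zsum_ext _ (gp j)) by (intros; apply gp_sym). apply gp_row_le. Qed.

Lemma gp_le i j : gp i j <= Gm.
Proof. unfold gp; destruct (Z.eq_dec j i). pose proof Gm_pos; lra. rewrite Gw_shift.
  pose proof (gg_abs_le (j - i)); pose proof (Rle_abs (gg (j - i))); lra. Qed.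

Lemma Gw_abs_le i j : Rabs (Gw lam c dx i j) <= Gm.
Proof. rewrite Gw_shift; apply gg_abs_le. Qed.

End GSec.

Lemma dq_bound (phi phi' : R -> R) K :
  (forall s, derivable_pt_lim phi s (phi' s)) -> (forall s, Rabs (phi' s) <= K) ->
  (forall x y, x <= y -> phi x <= phi y) ->
  forall x y, x <> y -> 0 <= (phi y - phi x) / (y - x) <= K.
Proof.
  intros Hd HK Hm x y Hxy. destruct (Rlt_dec x y) as [Hlt|Hge].
  - destruct (MVT_cor2 phi phi' x y Hlt) as [c0 [E _]]. intros; apply Hd.
    rewrite E. replace (phi' c0 * (y - x) / (y - x)) with (phi' c0) by (field; lra).
    split. pose proof (Hm x y ltac:(lra)). 
    destruct (Rle_dec 0 (phi' c0)); auto. nra.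
    pose proof (HK c0); pose proof (Rle_abs (phi' c0)); lra.
  - assert (Hlt : y < x) by lra.
    destruct (MVT_cor2 phi phi' y x Hlt) as [c0 [E _]]. intros; apply Hd.
    replace ((phi y - phi x) / (y - x)) with ((phi x - phi y) / (x - y)) by (field; lra).
    rewrite E. replace (phi' c0 * (x - y) / (x - y)) with (phi' c0) by (field; lra).
    split. pose proof (Hm y x ltac:(lra)). 
    destruct (Rle_dec 0 (phi' c0)); auto. nra.
    pose proof (HK c0); pose proof (Rle_abs (phi' c0)); lra.
Qed.

Lemma lip_cont g : Lipschitz g -> forall x, continuity_pt g x.
Proof. intros [L HL] x. unfold continuity_pt, continue_in, limit1_in, limit_in. intros eps He.
  exists (eps / (Rabs L + 1)). split. apply Rdiv_lt_0_compat; pose proof (Rabs_pos L); lra.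
  intros y [_ Hy]. simpl in *. unfold R_dist in *. eapply Rle_lt_trans. apply HL.
  pose proof (Rabs_pos L); pose proof (Rle_abs L); pose proof (Rabs_pos (y - x)).
  apply Rle_lt_trans with (Rabs L * Rabs (y - x)). apply Rmult_le_compat_r; lra.
  assert (Rabs (y - x) * (Rabs L + 1) < eps).
  { apply (Rmult_lt_compat_r (Rabs L + 1)) in Hy; [|lra]. unfold Rdiv in Hy. rewrite Rmult_assoc, Rinv_l in Hy; lra. }
  nra. Qed.

Lemma Rint_eq f x y (pr : Riemann_integrable f x y) : Rint f x y = RiemannInt pr.
Proof. unfold Rint.
  destruct (epsilon_spec (inhabits 0) (fun I => exists pr : Riemann_integrable f x y, RiemannInt pr = I)
    (ex_intro _ (RiemannInt pr) (ex_intro _ pr eq_refl))) as [pr' E].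
  rewrite <- E. apply RiemannInt_P5. Qed.

Lemma cont_int g : (forall x, continuity_pt g x) -> forall x y, Riemann_integrable g x y.
Proof. intros Hg x y. destruct (Rle_dec x y).
  apply continuity_implies_RiemannInt; auto.
  apply RiemannInt_P1. apply continuity_implies_RiemannInt; auto; lra. Qed.

Lemma Rint_chasles g x y z : (forall x y, Riemann_integrable g x y) -> Rint g x y + Rint g y z = Rint g x z.
Proof. intros H. rewrite (Rint_eq g x y (H x y)), (Rint_eq g y z (H y z)), (Rint_eq g x z (H x z)).
  apply RiemannInt_P26. Qed.

Lemma Rint_bounds g x y lo hi : (forall x y, Riemann_integrable g x y) -> x <= y ->
  (forall t, lo <= g t <= hi) -> lo * (y - x) <= Rint g x y <= hi * (y - x).
Proof. intros H Hxy Hb. rewrite (Rint_eq g x y (H x y)). split.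
  - rewrite <- (RiemannInt_P15 (RiemannInt_P14 x y lo)). apply RiemannInt_P19; auto.
    intros; unfold fct_cte; apply Hb.
  - rewrite <- (RiemannInt_P15 (RiemannInt_P14 x y hi)). apply RiemannInt_P19; auto.
    intros; unfold fct_cte; apply Hb. Qed.


Lemma Rint_chasles_i g x y z : inhabited (Riemann_integrable g x y) -> inhabited (Riemann_integrable g y z) ->
  inhabited (Riemann_integrable g x z) -> Rint g x y + Rint g y z = Rint g x z.
Proof. intros [p1] [p2] [p3]. rewrite (Rint_eq g x y p1), (Rint_eq g y z p2), (Rint_eq g x z p3).
  apply RiemannInt_P26. Qed.

Section U0.
Variable u0 : R -> R.
Variable dx : R.
Hypothesis Hdx : 0 < dx.
Hypothesis Hu0 : integrable_L1 u0.

Let ua := fun t => Rabs (u0 t).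

Lemma ua_int x y : inhabited (Riemann_integrable ua x y).
Proof. destruct Hu0 as [H _]. destruct (H x y) as [pr]. constructor. apply RiemannInt_P16; exact pr. Qed.

Lemma ua_nonneg x y : x <= y -> 0 <= Rint ua x y.
Proof. intros Hxy. destruct (ua_int x y) as [pr]. rewrite (Rint_eq _ _ _ pr).
  replace 0 with (RiemannInt (RiemannInt_P14 x y 0)) by (rewrite RiemannInt_P15; ring).
  apply RiemannInt_P19; auto.
  intros; unfold fct_cte, ua; apply Rabs_pos. Qed.

Lemma u0_abs_le x y : x <= y -> Rabs (Rint u0 x y) <= Rint ua x y.
Proof. intros Hxy. destruct Hu0 as [H _]. destruct (H x y) as [pr]. rewrite (Rint_eq _ _ _ pr).
  unfold ua; rewrite (Rint_eq _ _ _ (RiemannInt_P16 pr)). apply RiemannInt_P17; auto. Qed.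

Definition JJ (i : Z) := Rint ua (IZR i * dx) (IZR (i + 1) * dx).

Lemma zpart_JJ N : zpart JJ N = Rint ua (IZR (- (Z.of_nat N + 1)) * dx) (IZR (Z.of_nat N + 1) * dx).
Proof. induction N.
  - rewrite zpart_0. unfold JJ. simpl. rewrite Rplus_comm. apply Rint_chasles_i; apply ua_int.
  - rewrite zpart_S, IHN. unfold JJ.
    replace (- Z.of_nat (S (S N)) + 1)%Z with (- (Z.of_nat N + 1))%Z by lia.
    replace (Z.of_nat (S N)) with (Z.of_nat N + 1)%Z by lia.
    replace (- Z.of_nat (S (S N)))%Z with (- (Z.of_nat N + 1 + 1))%Z by lia.
    pose proof (Rint_chasles_i ua (IZR (- (Z.of_nat N + 1 + 1)) * dx) (IZR (- (Z.of_nat N + 1)) * dx) (IZR (Z.of_nat N + 1) * dx) (ua_int _ _) (ua_int _ _) (ua_int _ _)).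
    pose proof (Rint_chasles_i ua (IZR (- (Z.of_nat N + 1 + 1)) * dx) (IZR (Z.of_nat N + 1) * dx) (IZR (Z.of_nat N + 1 + 1) * dx) (ua_int _ _) (ua_int _ _) (ua_int _ _)).
    lra. Qed.

Lemma V0_summable : Zsummable (fun i => / dx * Rint u0 (IZR i * dx) (IZR (i + 1) * dx)).
Proof. destruct Hu0 as [_ [C HC]]. exists (/ dx * C). intros N.
  assert (Hi : 0 < / dx) by (apply Rinv_0_lt_compat; lra).
  eapply Rle_trans. apply (zpart_le _ (fun i => / dx * JJ i)).
  intros i; rewrite Rabs_mult, Rabs_right by lra. apply Rmult_le_compat_l; [lra|].
  apply u0_abs_le. rewrite plus_IZR. nra.
  rewrite zpart_scal, zpart_JJ. apply Rmult_le_compat_l; [lra|].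
  set (X := IZR (Z.of_nat N + 1) * dx).
  assert (HX : 0 <= X) by (unfold X; apply Rmult_le_pos; [apply IZR_le; lia|lra]).
  replace (IZR (- (Z.of_nat N + 1)) * dx) with (- X) by (unfold X; rewrite opp_IZR; ring).
  destruct (INR_unbounded X) as [n Hn].
  eapply Rle_trans; [|apply (HC n)]. fold ua.
  rewrite <- (Rint_chasles_i ua (- INR n) (- X) (INR n)) by apply ua_int.
  rewrite <- (Rint_chasles_i ua (- X) X (INR n)) by apply ua_int.
  pose proof (ua_nonneg (- INR n) (- X) ltac:(lra)). pose proof (ua_nonneg X (INR n) ltac:(lra)). lra.
Qed.

End U0.

Section Scheme.
Variables (f a : R -> R) (fh d1 d2 : R -> R -> R) (b lam c dx dt : R) (u0 : R -> R) (Ma M1 M2 : R).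
Hypothesis Hf : Lipschitz f.
Hypothesis Hf0 : f 0 = 0.
Hypothesis Ha : Lipschitz a.
Hypothesis Ha_nn : forall s, 0 <= a s.
Hypothesis Hb : 0 <= b.
Hypothesis Hlam : 0 < lam < 1.
Hypothesis Hc : 0 < c.
Hypothesis Hfh_C1 : C1_with_partials fh d1 d2.
Hypothesis Hfh_Lip : Lipschitz2 fh.
Hypothesis Hfh_cons : forall u, fh u u = f u.
Hypothesis Hfh_mon1 : forall u u' v, u <= u' -> fh u v <= fh u' v.
Hypothesis Hfh_mon2 : forall u v v', v <= v' -> fh u v' <= fh u v.
Hypothesis Hdx : 0 < dx.
Hypothesis Hdt : 0 < dt.
Hypothesis HM1 : is_sup_abs2 d1 M1.
Hypothesis HM2 : is_sup_abs2 d2 M2.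
Hypothesis HMa : is_sup_abs a Ma.
Hypothesis Hu0 : integrable_L1 u0 /\ bounded_variation u0.
Hypothesis HCFL : dt / dx * (M1 + M2) + 2 * dt / (dx * dx) * Ma
          + b * dlam lam c * (dt / Rpower dx lam) <= 1.

Lemma d1_le u v : Rabs (d1 u v) <= M1.
Proof. destruct HM1 as [H _]. apply H. exists u, v; auto. Qed.
Lemma d2_le u v : Rabs (d2 u v) <= M2.
Proof. destruct HM2 as [H _]. apply H. exists u, v; auto. Qed.
Lemma a_le u : a u <= Ma.
Proof. destruct HMa as [H _]. pose proof (Rle_abs (a u)). assert (Rabs (a u) <= Ma) by (apply H; exists u; auto). lra. Qed.

Definition dqf1 u u' v := if Req_EM_T u' u then 0 else (fh u' v - fh u v) / (u' - u).
Definition dqf2 u v v' := if Req_EM_T v' v then 0 else (fh u v' - fh u v) / (v' - v).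
Definition AA := Aint a.
Definition dqA u u' := if Req_EM_T u' u then 0 else (AA u' - AA u) / (u' - u).

Lemma dqf1_spec u u' v : fh u' v - fh u v = dqf1 u u' v * (u' - u) /\ 0 <= dqf1 u u' v <= M1.
Proof. unfold dqf1. destruct (Req_EM_T u' u).
  - subst. split. ring. split. lra. pose proof (d1_le 0 0); pose proof (Rabs_pos (d1 0 0)); lra.
  - split. field. lra.
    destruct Hfh_C1 as [D1 _].
    apply (dq_bound (fun s => fh s v) (fun s => d1 s v)); auto.
    intros; apply d1_le.
Qed.

Lemma dqf2_spec u v v' : fh u v' - fh u v = dqf2 u v v' * (v' - v) /\ - M2 <= dqf2 u v v' <= 0.
Proof. unfold dqf2. destruct (Req_EM_T v' v).
  - subst. split. ring. split. pose proof (d2_le 0 0); pose proof (Rabs_pos (d2 0 0)); lra. lra.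
  - split. field. lra.
    destruct Hfh_C1 as [_ [D2 _]].
    assert (H := dq_bound (fun s => - fh u s) (fun s => - d2 u s) M2).
    destruct (H) with (x := v) (y := v'); auto.
    intros s; apply (derivable_pt_lim_opp (fun s => fh u s)); apply D2.
    intros s; rewrite Rabs_Ropp; apply d2_le.
    intros x y Hxy; pose proof (Hfh_mon2 u x y Hxy); lra.
    split.
    replace ((fh u v' - fh u v) / (v' - v)) with (- ((- fh u v' - - fh u v) / (v' - v))) by (field; lra). lra.
    replace ((fh u v' - fh u v) / (v' - v)) with (- ((- fh u v' - - fh u v) / (v' - v))) by (field; lra). lra.
Qed.

Lemma a_int x y : Riemann_integrable a x y.
Proof. apply cont_int, lip_cont, Ha. Qed.

Lemma AA_diff u v : u <= v -> 0 <= AA v - AA u <= Ma * (v - u).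
Proof. intros H. unfold AA, Aint. rewrite <- (Rint_chasles a 0 u v a_int).
  replace (Rint a 0 u + Rint a u v - Rint a 0 u) with (Rint a u v) by ring.
  pose proof (Rint_bounds a u v 0 Ma a_int H). assert (forall t, 0 <= a t <= Ma) by (intros; split; [apply Ha_nn|apply a_le]).
  specialize (H0 H1). lra. Qed.

Lemma Ma_nn : 0 <= Ma.
Proof. pose proof (a_le 0); pose proof (Ha_nn 0); lra. Qed.
Lemma M1_nn : 0 <= M1.
Proof. pose proof (d1_le 0 0); pose proof (Rabs_pos (d1 0 0)); lra. Qed.
Lemma M2_nn : 0 <= M2.
Proof. pose proof (d2_le 0 0); pose proof (Rabs_pos (d2 0 0)); lra. Qed.

Lemma dqA_spec u u' : AA u' - AA u = dqA u u' * (u' - u) /\ 0 <= dqA u u' <= Ma.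
Proof. unfold dqA. destruct (Req_EM_T u' u).
  - subst. split. ring. pose proof Ma_nn; lra.
  - split. field. lra. destruct (Rlt_dec u u').
    + pose proof (AA_diff u u' ltac:(lra)). split.
      unfold Rdiv; apply Rmult_le_pos; [lra|left; apply Rinv_0_lt_compat; lra].
      apply (Rmult_le_reg_r (u' - u)). lra. unfold Rdiv; rewrite Rmult_assoc, Rinv_l; lra.
    + pose proof (AA_diff u' u ltac:(lra)).
      replace ((AA u' - AA u) / (u' - u)) with ((AA u - AA u') / (u - u')) by (field; lra). split.
      unfold Rdiv; apply Rmult_le_pos; [lra|left; apply Rinv_0_lt_compat; lra].
      apply (Rmult_le_reg_r (u - u')). lra. unfold Rdiv; rewrite Rmult_assoc, Rinv_l; lra.
Qed.

Lemma AA_lip x y : Rabs (AA y - AA x) <= Ma * (Rabs x + Rabs y).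
Proof. destruct (dqA_spec x y) as [E B]. rewrite E, Rabs_mult. rewrite (Rabs_right (dqA x y)) by lra.
  apply Rmult_le_compat; auto; try lra; try apply Rabs_pos.
  unfold Rminus; eapply Rle_trans; [apply Rabs_triang|]; rewrite Rabs_Ropp; lra. Qed.

Lemma fh_bound : exists Lh, 0 <= Lh /\ forall x y, Rabs (fh x y) <= Lh * (Rabs x + Rabs y).
Proof. destruct Hfh_Lip as [L HL]. exists (Rabs L). split. apply Rabs_pos. intros x y.
  specialize (HL x y 0 0). rewrite Hfh_cons, Hf0, !Rminus_0_r in HL.
  eapply Rle_trans; [apply HL|]. apply Rmult_le_compat_r. pose proof (Rabs_pos x); pose proof (Rabs_pos y); lra.
  apply Rle_abs. Qed.


Local Notation GW := (Gw lam c dx).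
Local Notation GM := (Gm lam c dx).
Local Notation g0 := (gg lam c dx 0).

Definition FF (V : Z -> R) (i : Z) := numflux fh a dx V i.
Definition QQ (V : Z -> R) (l : Z) := Zsum (fun j => Gw lam c dx l j * V j).
Definition PP V i := Zsum_upto (QQ V) i.
Definition WW V i := FF V i - b * PP V i.
Definition Unext V i := V i - dt * ((FF V i - FF V (i - 1)%Z) / dx) + dt * b * Ldisc lam c dx V i.
Definition RR (Zf : Z -> R) l := Zsum (fun j => Gw lam c dx l j * Zf j).

Lemma U_S n : U fh a b lam c dx dt u0 (S n) = Unext (U fh a b lam c dx dt u0 n).
Proof. reflexivity. Qed.
Lemma W_eq n i : W fh a b lam c dx dt u0 n i = WW (U fh a b lam c dx dt u0 n) i.
Proof. reflexivity. Qed.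

Lemma GM_pos : 0 < GM.
Proof. apply Gm_pos; auto. Qed.

Lemma Rabs_div_dx x : Rabs (x / dx) = Rabs x / dx.
Proof. unfold Rdiv; rewrite Rabs_mult, (Rabs_right (/ dx)); auto. left; apply Rinv_0_lt_compat; lra. Qed.

Lemma FF_bound : exists KF, 0 <= KF /\ forall V i, Rabs (FF V i) <= KF * (Rabs (V i) + Rabs (V (i+1)%Z)).
Proof. destruct fh_bound as [Lh [HL1 HL2]]. exists (Lh + Ma / dx). split.
  pose proof Ma_nn. assert (0 <= Ma/dx) by (unfold Rdiv; apply Rmult_le_pos; [lra|left; apply Rinv_0_lt_compat; lra]). lra.
  intros V i. unfold FF, numflux. pose proof (AA_lip (V i) (V (i+1)%Z)) as HA; unfold AA in HA.
  pose proof (HL2 (V i) (V (i+1)%Z)) as HF.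
  unfold Rminus at 1; eapply Rle_trans; [apply Rabs_triang|]. rewrite Rabs_Ropp, Rabs_div_dx.
  assert (Rabs (Aint a (V (i + 1)%Z) - Aint a (V i)) / dx <= Ma * (Rabs (V i) + Rabs (V (i + 1)%Z)) / dx).
  { unfold Rdiv; apply Rmult_le_compat_r; auto. left; apply Rinv_0_lt_compat; lra. }
  replace ((Lh + Ma / dx) * (Rabs (V i) + Rabs (V (i + 1)%Z))) with
    (Lh * (Rabs (V i) + Rabs (V (i + 1)%Z)) + Ma * (Rabs (V i) + Rabs (V (i + 1)%Z)) / dx) by (field; lra).
  lra. Qed.

Section WithV.
Variable V : Z -> R.
Hypothesis HV : Zsummable V.

Lemma FF_summable : Zsummable (FF V).
Proof. destruct FF_bound as [KF [HK1 HK2]].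
  apply (Zsummable_dom V (fun k => V (k + 1)%Z) _ KF KF); auto. apply Zsummable_shift; auto.
  intros; rewrite <- Rmult_plus_distr_l; auto. Qed.

Lemma QQ_inner l : Zsummable (fun j => GW l j * V j).
Proof. apply (Zsummable_dom1 V _ GM). left; apply GM_pos. auto.
  intros j; rewrite Rabs_mult; apply Rmult_le_compat_r. apply Rabs_pos. apply Gw_abs_le; auto. Qed.

Lemma QQ_bnd : exists BQ, Zbnd (QQ V) BQ.
Proof. destruct HV as [BV HBV]. exists (GM * BV). intros N.
  eapply Rle_trans. apply zpart_le with (g := fun l => Zsum (fun j => Rabs (GW l j * V j))).
  intros; apply Zsum_abs, QQ_inner.
  destruct (zpart_Zsum_swap (fun l j => Rabs (GW l j * V j)) N) as [S1 S2].
  intros; apply Zsummable_abs, QQ_inner.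
  rewrite S2. eapply Rle_trans. apply (Zsum_le _ (fun j => GM * Rabs (V j))); auto.
  apply Zsummable_scal, Zsummable_abs; auto.
  intros j. rewrite (zpart_ext _ (fun l => Rabs (V j) * Rabs (GW l j))) by (intros; rewrite Rabs_mult; ring).
  rewrite zpart_scal. rewrite Rmult_comm. apply Rmult_le_compat_r. apply Rabs_pos.
  apply (Gw_col_bnd lam c dx Hlam Hc j N).
  rewrite Zsum_scal by (apply Zsummable_abs; auto). apply Rmult_le_compat_l. left; apply GM_pos.
  apply Zsum_abs_bound; auto. Qed.

Lemma QQ_summable : Zsummable (QQ V).
Proof. destruct QQ_bnd as [B H]; exists B; auto. Qed.

Lemma PP_rec i : PP V i = QQ V i + PP V (i - 1)%Z.
Proof. apply upto_rec, QQ_summable. Qed.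

Lemma PP_bound : exists BP, forall i, Rabs (PP V i) <= BP.
Proof. destruct QQ_bnd as [B H]; exists B; intros; apply upto_bound; auto. Qed.

Lemma PP_tozero : tozero_m (PP V).
Proof. apply upto_tozero, QQ_summable. Qed.

Lemma WW_bounded : exists MZ, forall i, Rabs (WW V i) <= MZ.
Proof. destruct FF_bound as [KF [HK1 HK2]]. destruct PP_bound as [BP HBP]. destruct HV as [BV HBV].
  exists (KF * (BV + BV) + b * BP). intros i. unfold WW.
  unfold Rminus; eapply Rle_trans; [apply Rabs_triang|]. rewrite Rabs_Ropp, Rabs_mult, (Rabs_right b) by lra.
  apply Rplus_le_compat. eapply Rle_trans; [apply HK2|]. apply Rmult_le_compat_l; auto.
  apply Rplus_le_compat; apply (term_le_bound V BV); auto.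
  apply Rmult_le_compat_l; auto. Qed.

Lemma WW_tozero : tozero_m (WW V).
Proof. intros e He. set (e1 := e / (2 * (b + 1))).
  assert (He1 : 0 < e1) by (unfold e1; apply Rdiv_lt_0_compat; lra).
  assert (E1 : e1 * (2 * (b + 1)) = e) by (unfold e1; field; lra).
  destruct (Zsummable_tozero _ FF_summable e1 He1) as [K1 H1].
  destruct (PP_tozero e1 He1) as [K2 H2].
  exists (Z.min K1 K2). intros i Hi. specialize (H1 i ltac:(lia)). specialize (H2 i ltac:(lia)).
  unfold WW. unfold Rminus; eapply Rle_lt_trans; [apply Rabs_triang|]. rewrite Rabs_Ropp, Rabs_mult, (Rabs_right b) by lra.
  assert (b * Rabs (PP V i) <= b * e1) by (apply Rmult_le_compat_l; lra). nra. Qed.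

Lemma Unext_eq j : Unext V j = V j - dt / dx * (WW V j - WW V (j - 1)%Z).
Proof. unfold Unext, WW, Ldisc. rewrite (PP_rec j). fold (QQ V j). field. lra. Qed.

Lemma Unext_summable : Zsummable (Unext V).
Proof.
  pose proof FF_summable as HF. assert (HFm : Zsummable (fun k => FF V (k - 1)%Z)).
  { eapply Zsummable_ext; [|apply (Zsummable_shift _ (-1) HF)]. intros; reflexivity. }
  eapply Zsummable_ext; [|apply (Zsummable_plus _ _ (Zsummable_minus _ _ HV (Zsummable_scal (dt/dx) _ HF))
     (Zsummable_plus _ _ (Zsummable_scal (dt/dx) _ HFm) (Zsummable_scal (dt*b/dx) _ QQ_summable)))].
  intros; unfold Unext, Ldisc; fold (QQ V k); field; lra. Qed.

End WithV.

Section WithZ.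
Variable Zf : Z -> R.
Variable MZ : R.
Hypothesis HZ : forall j, Rabs (Zf j) <= MZ.

Lemma MZ_nn : 0 <= MZ.
Proof. pose proof (HZ 0%Z); pose proof (Rabs_pos (Zf 0%Z)); lra. Qed.

Lemma RR_inner l : Zsummable (fun j => GW l j * Zf j).
Proof. apply (Zsummable_dom1 (fun j => GW l j) _ MZ). apply MZ_nn. exists GM; apply Gw_row_bnd; auto.
  intros j; rewrite Rabs_mult, Rmult_comm; apply Rmult_le_compat_r; auto. apply Rabs_pos. Qed.

Lemma RR_diff l : RR Zf l - RR Zf (l - 1)%Z = Zsum (fun j => GW l j * (Zf j - Zf (j - 1)%Z)).
Proof.
  assert (HZm : forall j, Rabs (Zf (j - 1)%Z) <= MZ) by auto.
  assert (S1 : Zsummable (fun j => GW l j * Zf (j - 1)%Z)).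
  { apply (Zsummable_dom1 (fun j => GW l j) _ MZ). apply MZ_nn. exists GM; apply Gw_row_bnd; auto.
    intros j; rewrite Rabs_mult, Rmult_comm; apply Rmult_le_compat_r; auto. apply Rabs_pos. }
  unfold RR. rewrite <- (Zsum_shiftm1 (fun j => GW (l - 1)%Z j * Zf j)) by apply RR_inner.
  rewrite (Zsum_ext (fun k => GW (l - 1)%Z (k - 1)%Z * Zf (k - 1)%Z) (fun j => GW l j * Zf (j - 1)%Z)).
  rewrite <- Zsum_minus by (auto; apply RR_inner). apply Zsum_ext; intros; ring.
  intros k; rewrite !Gw_shift; do 2 f_equal; lia. Qed.

Lemma RR_next i : RR Zf (i + 1)%Z - RR Zf i = Zsum (fun j => GW i j * (Zf (j + 1)%Z - Zf j)).
Proof.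
  assert (S1 : Zsummable (fun j => GW i j * Zf (j + 1)%Z)).
  { apply (Zsummable_dom1 (fun j => GW i j) _ MZ). apply MZ_nn. exists GM; apply Gw_row_bnd; auto.
    intros j; rewrite Rabs_mult, Rmult_comm; apply Rmult_le_compat_r; auto. apply Rabs_pos. }
  unfold RR. rewrite <- (Zsum_shift1 (fun j => GW (i + 1)%Z j * Zf j)) by apply RR_inner.
  rewrite (Zsum_ext (fun k => GW (i + 1)%Z (k + 1)%Z * Zf (k + 1)%Z) (fun j => GW i j * Zf (j + 1)%Z)).
  rewrite <- Zsum_minus by (auto; apply RR_inner). apply Zsum_ext; intros; ring.
  intros k; rewrite !Gw_shift; do 2 f_equal; lia. Qed.

Lemma RR_split i : RR Zf i = g0 * Zf i + Zsum (fun j => gp lam c dx i j * Zf j).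
Proof. unfold RR.
  assert (S1 : Zsummable (fun j => gp lam c dx i j * Zf j)).
  { apply (Zsummable_dom1 (gp lam c dx i) _ MZ). apply MZ_nn. apply gp_row_summable; auto.
    intros j; rewrite Rabs_mult, Rmult_comm; apply Rmult_le_compat_r; auto. apply Rabs_pos. }
  rewrite (Zsum_ext _ (fun j => gp lam c dx i j * Zf j + (if Z.eq_dec j i then g0 * Zf i else 0))).
  rewrite Zsum_plus, Zsum_delta; auto. ring. apply Zsummable_delta.
  intros j; rewrite Gw_split. destruct (Z.eq_dec j i). subst; ring. ring. Qed.

Lemma gpZ_bound i : Rabs (Zsum (fun j => gp lam c dx i j * Zf j)) <= MZ * (- g0).
Proof.
  assert (S1 : Zsummable (fun j => gp lam c dx i j * Zf j)).
  { apply (Zsummable_dom1 (gp lam c dx i) _ MZ). apply MZ_nn. apply gp_row_summable; auto.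
    intros j; rewrite Rabs_mult, Rmult_comm; apply Rmult_le_compat_r; auto. apply Rabs_pos. }
  eapply Rle_trans. apply Zsum_abs; auto.
  eapply Rle_trans. apply (Zsum_le _ (fun j => MZ * gp lam c dx i j)). apply Zsummable_abs; auto.
  apply Zsummable_scal, gp_row_summable; auto.
  intros j; rewrite Rabs_mult, Rmult_comm, (Rabs_right (gp _ _ _ _ _)). apply Rmult_le_compat_r; auto.
  apply gp_nonneg; auto. apply Rle_ge, gp_nonneg; auto.
  rewrite Zsum_scal by (apply gp_row_summable; auto). apply Rmult_le_compat_l. apply MZ_nn. apply gp_row_le; auto.
Qed.

Lemma RR_tozero : tozero_m Zf -> tozero_m (RR Zf).
Proof. intros HT e He.
  set (x := fun d => Rabs (gg lam c dx d)).
  assert (Hx : Zsummable x) by (apply Zsummable_abs, gg_summable; auto).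
  set (Gs := Zsum x).
  assert (HGs : 0 <= Gs) by (apply Zsum_nonneg; auto; intros; apply Rabs_pos).
  pose proof MZ_nn as HMZ.
  set (e1 := e / (Gs + MZ + 1)).
  assert (He1 : 0 < e1) by (unfold e1; apply Rdiv_lt_0_compat; lra).
  assert (E1 : e1 * (Gs + MZ + 1) = e) by (unfold e1; field; lra).
  destruct (Zsum_cv x Hx e1 He1) as [K HK]. specialize (HK K (le_n _)). unfold Rdist in HK.
  assert (HK' : Gs - zpart x K < e1).
  { pose proof (zpart_le_Zsum x K Hx ltac:(intros; apply Rabs_pos)). fold Gs in H. apply Rabs_def2 in HK; unfold Gs; lra. }
  destruct (HT e1 He1) as [T HT1].
  exists (T - Z.of_nat K)%Z. intros m Hm.
  assert (Er : RR Zf m = Zsum (fun d => gg lam c dx d * Zf (d + m)%Z)).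
  { unfold RR. rewrite <- (Zsum_shift (fun j => GW m j * Zf j) m) by apply RR_inner.
    apply Zsum_ext; intros; rewrite Gw_shift; do 2 f_equal; lia. }
  assert (S1 : Zsummable (fun d => gg lam c dx d * Zf (d + m)%Z)).
  { apply (Zsummable_dom1 (gg lam c dx) _ MZ); auto. apply gg_summable; auto.
    intros j; rewrite Rabs_mult, Rmult_comm; apply Rmult_le_compat_r; auto. apply Rabs_pos. }
  assert (Sw : Zsummable (fun d => if inw K d then x d else 0)) by apply Zsummable_window.
  rewrite Er. eapply Rle_lt_trans. apply Zsum_abs; auto.
  eapply Rle_lt_trans. apply (Zsum_le _ (fun d => e1 * x d + MZ * (x d - (if inw K d then x d else 0)))).
  apply Zsummable_abs; auto.
  apply Zsummable_plus. apply Zsummable_scal; auto. apply Zsummable_scal, Zsummable_minus; auto.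
  intros d. rewrite Rabs_mult. fold (x d). assert (0 <= x d) by apply Rabs_pos.
  destruct (inw K d) eqn:Ed.
  - apply inw_true in Ed. specialize (HT1 (d + m)%Z ltac:(lia)).
    rewrite Rminus_diag, Rmult_0_r, Rplus_0_r.
    assert (Rabs (Zf (d+m)%Z) * x d <= e1 * x d) by (apply Rmult_le_compat_r; lra). lra.
  - rewrite Rminus_0_r. specialize (HZ (d + m)%Z). assert (0 <= e1 * x d) by (apply Rmult_le_pos; lra).
    assert (x d * Rabs (Zf (d + m)%Z) <= MZ * x d) by (rewrite Rmult_comm; apply Rmult_le_compat_r; lra). lra.
  - rewrite Zsum_plus, !Zsum_scal, Zsum_minus, Zsum_window; auto.
    2: apply Zsummable_minus; auto. 2: apply Zsummable_scal; auto. 2: apply Zsummable_scal, Zsummable_minus; auto.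
    fold Gs. assert (MZ * (Gs - zpart x K) <= MZ * e1) by (apply Rmult_le_compat_l; lra). nra.
Qed.

End WithZ.

Definition pp V i := dqf1 (V i) (Unext V i) (Unext V (i+1)%Z).
Definition qq V i := dqf2 (V i) (V (i+1)%Z) (Unext V (i+1)%Z).
Definition rr V j := dqA (V j) (Unext V j).
Definition Cc V i := - (dt/dx) * qq V i + dt/(dx*dx) * rr V (i+1)%Z.
Definition Dc V i := dt/dx * pp V i + dt/(dx*dx) * rr V i.

Section WithV2.
Variable V : Z -> R.
Hypothesis HV : Zsummable V.

Lemma REP_flux i : FF (Unext V) i = FF V i + Cc V i * (WW V (i+1)%Z - WW V i) - Dc V i * (WW V i - WW V (i-1)%Z).
Proof.
  unfold FF at 1, numflux.
  destruct (dqf1_spec (V i) (Unext V i) (Unext V (i+1)%Z)) as [E1 _].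
  destruct (dqf2_spec (V i) (V (i+1)%Z) (Unext V (i+1)%Z)) as [E2 _].
  destruct (dqA_spec (V (i+1)%Z) (Unext V (i+1)%Z)) as [E3 _].
  destruct (dqA_spec (V i) (Unext V i)) as [E4 _].
  unfold AA in E3, E4.
  pose proof (Unext_eq V HV i) as U1; pose proof (Unext_eq V HV (i+1)) as U2.
  replace (i + 1 - 1)%Z with i in U2 by lia.
  assert (D1 : Unext V i - V i = - (dt / dx) * (WW V i - WW V (i - 1)%Z)) by (rewrite U1; ring).
  assert (D2 : Unext V (i+1)%Z - V (i+1)%Z = - (dt / dx) * (WW V (i+1)%Z - WW V i)) by (rewrite U2; ring).
  rewrite D1 in E1, E4. rewrite D2 in E2, E3.
  unfold FF, numflux, Cc, Dc, pp, qq, rr.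
  set (t1 := dt / dx) in *. set (t2 := dt / (dx * dx)).
  assert (Et : t2 = t1 / dx) by (unfold t1, t2; field; lra).
  rewrite Et. field_simplify_eq; [|lra].
  nra.
Qed.

Lemma QQ_next MZ (HZ : forall j, Rabs (WW V j) <= MZ) l :
  QQ (Unext V) l = QQ V l - dt/dx * (RR (WW V) l - RR (WW V) (l - 1)%Z).
Proof. unfold QQ.
  rewrite (Zsum_ext _ (fun j => GW l j * V j - dt/dx * (GW l j * (WW V j - WW V (j - 1)%Z))))
    by (intros; rewrite Unext_eq by auto; ring).
  assert (HZ2 : forall j, Rabs (WW V j - WW V (j - 1)%Z) <= MZ + MZ).
  { intros j; unfold Rminus; eapply Rle_trans; [apply Rabs_triang|]; rewrite Rabs_Ropp.
    apply Rplus_le_compat; auto. }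
  rewrite Zsum_minus, Zsum_scal. rewrite (RR_diff (WW V) MZ HZ l). auto.
  apply (RR_inner _ _ HZ2). apply QQ_inner; auto. apply Zsummable_scal. apply (RR_inner _ _ HZ2). Qed.

Lemma upart_next MZ (HZ : forall j, Rabs (WW V j) <= MZ) i M :
  upart (QQ (Unext V)) i M = upart (QQ V) i M - dt/dx * (RR (WW V) i - RR (WW V) (i - Z.of_nat (S M))%Z).
Proof. induction M.
  - unfold upart; cbn [sum_f_R0]. replace (i - Z.of_nat 0)%Z with i by lia.
    replace (i - Z.of_nat 1)%Z with (i - 1)%Z by lia. rewrite (QQ_next MZ HZ); ring.
  - unfold upart in *; rewrite !tech5, IHM, (QQ_next MZ HZ).
    replace (i - Z.of_nat (S M) - 1)%Z with (i - Z.of_nat (S (S M)))%Z by lia. ring. Qed.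

Lemma REP_PP i : PP (Unext V) i = PP V i - dt/dx * RR (WW V) i.
Proof. destruct (WW_bounded V HV) as [MZ HZ].
  unfold PP at 1. rewrite (upto_unique _ i (PP V i - dt/dx * (RR (WW V) i - 0))). ring.
  pose proof (upto_cv (QQ V) i (QQ_summable V HV)) as H1.
  assert (H2 : Un_cv (fun M => RR (WW V) (i - Z.of_nat (S M))%Z) 0).
  { intros e He. destruct (RR_tozero (WW V) MZ HZ (WW_tozero V HV) e He) as [K HK].
    exists (Z.to_nat (i - K)); intros n Hn; unfold Rdist; rewrite Rminus_0_r; apply HK; lia. }
  pose proof (CV_minus _ _ _ _ H1 (CV_mult _ _ _ _ (cv_const (dt/dx)) (CV_minus _ _ _ _ (cv_const (RR (WW V) i)) H2))) as H3.
  intros e He; destruct (H3 e He) as [N HN]; exists N; intros n Hn. rewrite (upart_next MZ HZ). apply HN; auto.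
Qed.

Lemma REP i : WW (Unext V) i = WW V i + Cc V i * (WW V (i+1)%Z - WW V i) - Dc V i * (WW V i - WW V (i-1)%Z)
   + b * dt / dx * RR (WW V) i.
Proof. unfold WW at 1. rewrite REP_flux, REP_PP. unfold WW. field. lra. Qed.

End WithV2.

Definition gam0 := dt / dx * (M1 + M2) + 2 * dt / (dx * dx) * Ma.
Definition beta := b * dt / dx.

Lemma t1_nn : 0 <= dt / dx.
Proof. unfold Rdiv; apply Rmult_le_pos; [lra|left; apply Rinv_0_lt_compat; lra]. Qed.
Lemma t2_nn : 0 <= dt / (dx * dx).
Proof. unfold Rdiv; apply Rmult_le_pos; [lra|left; apply Rinv_0_lt_compat; nra]. Qed.
Lemma beta_nn : 0 <= beta.
Proof. unfold beta. unfold Rdiv; apply Rmult_le_pos; [nra|left; apply Rinv_0_lt_compat; lra]. Qed.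

Lemma coef_specs V i : 0 <= pp V i <= M1 /\ - M2 <= qq V i <= 0 /\ 0 <= rr V i <= Ma.
Proof. unfold pp, qq, rr. split; [apply dqf1_spec|split; [apply dqf2_spec|apply dqA_spec]]. Qed.

Lemma Cc_nn V i : 0 <= Cc V i.
Proof. unfold Cc. destruct (coef_specs V i) as [_ [Q _]]. destruct (coef_specs V (i+1)%Z) as [_ [_ Rr]].
  pose proof t1_nn; pose proof t2_nn. nra. Qed.

Lemma Dc_nn V i : 0 <= Dc V i.
Proof. unfold Dc. destruct (coef_specs V i) as [P [_ Rr]].
  pose proof t1_nn; pose proof t2_nn. nra. Qed.

Lemma CD1 V i : Cc V i + Dc V i <= gam0.
Proof. unfold Cc, Dc, gam0. destruct (coef_specs V i) as [P [Q Rr]]. destruct (coef_specs V (i+1)%Z) as [_ [_ R1]].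
  replace (2 * dt / (dx * dx)) with (2 * (dt / (dx * dx))) by (field; lra).
  pose proof t1_nn; pose proof t2_nn. nra. Qed.

Lemma CD2 V i : Cc V i + Dc V (i+1)%Z <= gam0.
Proof. unfold Cc, Dc, gam0. destruct (coef_specs V i) as [P [Q Rr]]. destruct (coef_specs V (i+1)%Z) as [P1 [_ R1]].
  replace (2 * dt / (dx * dx)) with (2 * (dt / (dx * dx))) by (field; lra).
  pose proof t1_nn; pose proof t2_nn. nra. Qed.

Lemma CFL' : gam0 + beta * (- g0) <= 1.
Proof. rewrite gg_0 by auto. unfold gam0, beta.
  assert (Rpower dx (1 - lam) = dx * / Rpower dx lam).
  { unfold Rminus; rewrite Rpower_plus, Rpower_1, Rpower_Ropp; auto. }
  rewrite H. assert (0 < Rpower dx lam) by (unfold Rpower; apply exp_pos).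
  replace (b * dt / dx * - - (dlam lam c * (dx * / Rpower dx lam))) with (b * dlam lam c * (dt / Rpower dx lam)) by (field; lra).
  lra. Qed.

Lemma lin4 A C D B x y z s : 0 <= A -> 0 <= C -> 0 <= D -> 0 <= B ->
  Rabs (A * x + C * y + D * z + B * s) <= A * Rabs x + C * Rabs y + D * Rabs z + B * Rabs s.
Proof. intros. eapply Rle_trans; [apply Rabs_triang|]. eapply Rle_trans; [apply Rplus_le_compat_r, Rabs_triang|].
  eapply Rle_trans; [apply Rplus_le_compat_r, Rplus_le_compat_r, Rabs_triang|].
  rewrite !Rabs_mult, !(Rabs_right A), !(Rabs_right C), !(Rabs_right D), !(Rabs_right B) by lra. lra. Qed.

Lemma step_sup V M : Zsummable V -> (forall i, Rabs (WW V i) <= M) -> forall i, Rabs (WW (Unext V) i) <= M.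
Proof. intros HV HM i. rewrite REP by auto. rewrite (RR_split (WW V) M HM i).
  set (S := Zsum _). pose proof (gpZ_bound (WW V) M HM i) as HS. fold S in HS.
  pose proof (CD1 V i). pose proof CFL'. pose proof (Cc_nn V i); pose proof (Dc_nn V i). pose proof beta_nn.
  pose proof (gg_0_neg lam c dx Hlam Hc).
  replace (WW V i + Cc V i * (WW V (i + 1)%Z - WW V i) - Dc V i * (WW V i - WW V (i - 1)%Z) +
     b * dt / dx * (g0 * WW V i + S)) with
    ((1 - Cc V i - Dc V i + beta * g0) * WW V i + Cc V i * WW V (i+1)%Z + Dc V i * WW V (i-1)%Z + beta * S)
    by (unfold beta; field; lra).
  eapply Rle_trans. apply lin4; auto. fold gam0 in *. lra.
  pose proof (HM i); pose proof (HM (i+1)%Z); pose proof (HM (i-1)%Z).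
  assert (beta * Rabs S <= beta * (M * - g0)) by (apply Rmult_le_compat_l; auto).
  assert ((1 - Cc V i - Dc V i + beta * g0) * Rabs (WW V i) <= (1 - Cc V i - Dc V i + beta * g0) * M)
    by (apply Rmult_le_compat_l; lra).
  assert (Cc V i * Rabs (WW V (i+1)%Z) <= Cc V i * M) by (apply Rmult_le_compat_l; lra).
  assert (Dc V i * Rabs (WW V (i-1)%Z) <= Dc V i * M) by (apply Rmult_le_compat_l; lra).
  nra. Qed.

Lemma Zsum_pt h i t : Zsum (fun j => if Z.eq_dec i (j + t) then h j else 0) = h (i - t)%Z.
Proof. rewrite (Zsum_ext _ (fun j => if Z.eq_dec j (i - t) then h (i - t)%Z else 0)).
  apply Zsum_delta. intros j; destruct (Z.eq_dec i (j+t)); destruct (Z.eq_dec j (i-t)); try lia; auto.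
  f_equal; lia. Qed.

Lemma Zsummable_pt h i t : Zsummable (fun j => if Z.eq_dec i (j + t) then h j else 0).
Proof. eapply Zsummable_ext; [|apply (Zsummable_delta (i - t) (h (i - t)%Z))].
  intros j; destruct (Z.eq_dec i (j+t)); destruct (Z.eq_dec j (i-t)); try lia; auto.
  f_equal; lia. Qed.

Lemma zpart_pt_le X j t N : 0 <= X -> zpart (fun i => if Z.eq_dec i (j + t) then X else 0) N <= X.
Proof. intros H. rewrite zpart_delta. destruct (inw N (j + t)); lra. Qed.

Lemma step_tv V S : Zsummable V ->
  (forall N, zpart (fun i => Rabs (WW V (i+1)%Z - WW V i)) N <= S) ->
  forall N, zpart (fun i => Rabs (WW (Unext V) (i+1)%Z - WW (Unext V) i)) N <= S.
Proof.
  intros HV HS N.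
  set (Zf := WW V). set (Y := fun i => Zf (i+1)%Z - Zf i).
  assert (HYs : Zsummable Y) by (exists S; exact HS).
  assert (HYb : forall j, Rabs (Y j) <= S) by (intros; apply (term_le_bound Y S); exact HS).
  assert (HS0 : 0 <= S) by (pose proof (HYb 0%Z); pose proof (Rabs_pos (Y 0%Z)); lra).
  destruct (WW_bounded V HV) as [MZ HZ].
  set (A := fun i => 1 - Dc V (i+1)%Z - Cc V i + beta * g0).
  assert (HA : forall i, 0 <= A i).
  { intros i; unfold A. pose proof (CD2 V i). pose proof CFL'. lra. }
  set (Sg := fun i => Zsum (fun j => gp lam c dx i j * Y j)).
  assert (Rep : forall i, WW (Unext V) (i+1)%Z - WW (Unext V) i =
     A i * Y i + Cc V (i+1)%Z * Y (i+1)%Z + Dc V i * Y (i-1)%Z + beta * Sg i).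
  { intros i. rewrite !REP by auto. fold Zf.
    assert (ER : RR Zf (i+1)%Z = RR Zf i + (g0 * Y i + Sg i)).
    { unfold Sg. rewrite <- (RR_split Y S HYb i). pose proof (RR_next Zf MZ HZ i).
      assert (RR Y i = Zsum (fun j => GW i j * (Zf (j+1)%Z - Zf j))) by reflexivity. lra. }
    rewrite ER. unfold A, Y, beta. replace (i + 1 - 1)%Z with i by lia. replace (i - 1 + 1)%Z with i by lia. field. lra. }
  assert (Sgp : forall i, Zsummable (fun j => gp lam c dx i j * Rabs (Y j))).
  { intros i; apply (Zsummable_dom1 (gp lam c dx i) _ S); auto. apply gp_row_summable; auto.
    intros j; rewrite Rabs_mult, Rabs_Rabsolu, Rmult_comm; apply Rmult_le_compat_r; auto. apply Rabs_pos. }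
  set (v := fun i j => (if Z.eq_dec i (j + 0) then A j * Rabs (Y j) else 0)
                      + (if Z.eq_dec i (j + -1) then Cc V j * Rabs (Y j) else 0)
                      + (if Z.eq_dec i (j + 1) then Dc V (j+1)%Z * Rabs (Y j) else 0)
                      + beta * (gp lam c dx i j * Rabs (Y j))).
  assert (Sv : forall i, Zsummable (v i)).
  { intros i. unfold v. repeat apply Zsummable_plus; try apply Zsummable_pt. apply Zsummable_scal, Sgp. }
  assert (Ev : forall i, Zsum (v i) = A i * Rabs (Y i) + Cc V (i+1)%Z * Rabs (Y (i+1)%Z) + Dc V i * Rabs (Y (i-1)%Z)
                  + beta * Zsum (fun j => gp lam c dx i j * Rabs (Y j))).
  { intros i. unfold v.
    rewrite Zsum_plus by (repeat apply Zsummable_plus; try apply Zsummable_pt; apply Zsummable_scal, Sgp).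
    rewrite Zsum_plus by (repeat apply Zsummable_plus; try apply Zsummable_pt; apply Zsummable_scal, Sgp).
    rewrite Zsum_plus by (repeat apply Zsummable_plus; try apply Zsummable_pt; apply Zsummable_scal, Sgp).
    rewrite Zsum_scal by apply Sgp. rewrite !Zsum_pt.
    replace (i - 0)%Z with i by lia. replace (i - -1)%Z with (i + 1)%Z by lia.
    replace (i - 1 + 1)%Z with i by lia. reflexivity. }
  assert (Pt : forall i, Rabs (WW (Unext V) (i+1)%Z - WW (Unext V) i) <= Zsum (v i)).
  { intros i. rewrite Rep, Ev. eapply Rle_trans. apply lin4; auto. apply Cc_nn. apply Dc_nn. apply beta_nn.
    apply Rplus_le_compat_l. apply Rmult_le_compat_l. apply beta_nn.
    unfold Sg. eapply Rle_trans. apply Zsum_abs.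
    apply (Zsummable_dom1 (gp lam c dx i) _ S); auto. apply gp_row_summable; auto.
    intros j; rewrite Rabs_mult, Rmult_comm; apply Rmult_le_compat_r; auto. apply Rabs_pos.
    right; apply Zsum_ext; intros j. rewrite Rabs_mult, (Rabs_right (gp _ _ _ _ _)); auto.
    apply Rle_ge, gp_nonneg; auto. }
  eapply Rle_trans. apply (zpart_le _ _ N Pt).
  destruct (zpart_Zsum_swap v N Sv) as [Sw Ew]. rewrite Ew.
  eapply Rle_trans; [|apply (Zsum_abs_bound Y S HS)].
  apply Zsum_le; auto. apply Zsummable_abs; auto.
  intros j. unfold v. rewrite !zpart_plus, zpart_scal.
  rewrite (zpart_ext (fun i => gp lam c dx i j * Rabs (Y j)) (fun i => Rabs (Y j) * gp lam c dx i j)) by (intros; ring).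
  rewrite zpart_scal.
  assert (G1 : zpart (fun i => gp lam c dx i j) N <= - g0).
  { eapply Rle_trans. apply zpart_le_Zsum. apply gp_col_summable; auto. intros; apply gp_nonneg; auto. apply gp_col_le; auto. }
  pose proof (Rabs_pos (Y j)) as HY0. pose proof (HA j). pose proof (Cc_nn V j). pose proof (Dc_nn V (j+1)%Z). pose proof beta_nn.
  pose proof (zpart_pt_le (A j * Rabs (Y j)) j 0 N ltac:(apply Rmult_le_pos; auto)).
  pose proof (zpart_pt_le (Cc V j * Rabs (Y j)) j (-1) N ltac:(apply Rmult_le_pos; auto)).
  pose proof (zpart_pt_le (Dc V (j+1)%Z * Rabs (Y j)) j 1 N ltac:(apply Rmult_le_pos; auto)).
  assert (Rabs (Y j) * zpart (fun i => gp lam c dx i j) N <= Rabs (Y j) * - g0) by (apply Rmult_le_compat_l; auto).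
  assert (beta * (Rabs (Y j) * zpart (fun i => gp lam c dx i j) N) <= beta * (Rabs (Y j) * - g0)) by (apply Rmult_le_compat_l; auto).
  unfold A in *. nra.
Qed.

Lemma summ_all n : Zsummable (U fh a b lam c dx dt u0 n).
Proof. induction n.
  - exact (V0_summable u0 dx Hdx (proj1 Hu0)).
  - rewrite U_S. apply Unext_summable; auto. Qed.

Lemma main_in : forall n : nat,
    (forall M, (forall i, Rabs (W fh a b lam c dx dt u0 0 i) <= M) ->
       forall i, Rabs (W fh a b lam c dx dt u0 n i) <= M) /\
    (forall S, (forall N, zpart (fun i => Rabs (W fh a b lam c dx dt u0 0 (i + 1)%Z
                                              - W fh a b lam c dx dt u0 0 i)) N <= S) ->
       forall N, zpart (fun i => Rabs (W fh a b lam c dx dt u0 n (i + 1)%Z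
                                      - W fh a b lam c dx dt u0 n i)) N <= S).
Proof. intros n; split.
  - intros M H0. induction n. exact H0. intros i. rewrite W_eq, U_S. apply step_sup. apply summ_all.
    intros j; rewrite <- W_eq; apply IHn.
  - intros S H0. induction n. exact H0. intros N. rewrite (zpart_ext _ (fun i => Rabs (WW (Unext (U fh a b lam c dx dt u0 n)) (i+1)%Z - WW (Unext (U fh a b lam c dx dt u0 n)) i))) by (intros; rewrite !W_eq, U_S; auto).
    apply step_tv. apply summ_all. intros N'. rewrite <- (IHn N'). right; apply zpart_ext; intros; rewrite !W_eq; auto.
Qed.

End Scheme.

Theorem mainTheorem7
  (f a : R -> R) (fh d1 d2 : R -> R -> R) (b lam c dx dt : R) (u0 : R -> R)
  (Ma M1 M2 : R)
  (Hf : Lipschitz f) (Hf0 : f 0 = 0)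
  (Ha : Lipschitz a) (Ha_nn : forall s, 0 <= a s)
  (Ha_bd : exists K, forall s, Rabs (a s) <= K)
  (Hb : 0 <= b) (Hlam : 0 < lam < 1) (Hc : 0 < c)
  (Hfh_C1 : C1_with_partials fh d1 d2) (Hfh_Lip : Lipschitz2 fh)
  (Hfh_cons : forall u, fh u u = f u)
  (Hfh_mon1 : forall u u' v, u <= u' -> fh u v <= fh u' v)
  (Hfh_mon2 : forall u v v', v <= v' -> fh u v' <= fh u v)
  (Hdx : 0 < dx) (Hdt : 0 < dt)
  (Hu0 : integrable_L1 u0 /\ bounded_variation u0)
  (HM1 : is_sup_abs2 d1 M1) (HM2 : is_sup_abs2 d2 M2) (HMa : is_sup_abs a Ma)
  (HCFL : dt / dx * (M1 + M2) + 2 * dt / (dx * dx) * Ma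
          + b * dlam lam c * (dt / Rpower dx lam) <= 1) :
  forall n : nat,
    (forall M, (forall i, Rabs (W fh a b lam c dx dt u0 0 i) <= M) ->
       forall i, Rabs (W fh a b lam c dx dt u0 n i) <= M) /\
    (forall S, (forall N, zpart (fun i => Rabs (W fh a b lam c dx dt u0 0 (i + 1)%Z
                                              - W fh a b lam c dx dt u0 0 i)) N <= S) ->
       forall N, zpart (fun i => Rabs (W fh a b lam c dx dt u0 n (i + 1)%Z
                                      - W fh a b lam c dx dt u0 n i)) N <= S).
Proof.
  intros n. eapply main_in; eassumption.
Qed.
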